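(* Consider the process $\dot x(t)=Ax(t)+Bu(t)+d(t)$, $y(t)=x(t)+n(t)$, $x(0)=x_0$, in closed loop with the packetized, buffered remote control law described in the context, and let the actuator sampling period $\delta=\Delta/b$ ($b\in\mathbb N_1$) satisfy $$\delta\le \frac{1}{\mu_A}\log\!\Big[\Big(\frac{\sigma}{1+\sigma}\Big)\frac{\mu_A}{\max\{\|\Phi\|,1\}}+1\Big]\quad\text{if }\mu_A>0,\qquad \delta\le \Big(\frac{\sigma}{1+\sigma}\Big)\frac{1}{\max\{\|\Phi\|,1\}}\quad\text{if }\mu_A\le 0,$$ where $\sigma>0$ satisfies $\gamma_1-\sigma\gamma_2>0$. Then there exists a constant $\rho>0$ such that for every $m\in\mathbb N_0$, $$\|\phi(t)\|\le \sigma\|x(t)\|+\rho\,\|w_t\|_\infty\qquad\text{for all } t\in[z_m,\min\{z_m+h\delta,\,z_{m+1}\}).$$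
   Context: Process: $x(t)\in\mathbb R^n$, $u(t)\in\mathbb R^m$, $(A,B)$ stabilizable, $d,n:\mathbb R_{\ge0}\to\mathbb R^n$ unknown bounded measurable disturbance and measurement noise; $w:=[d'\;n']'$ and $\|w_t\|_\infty:=\sup_{s\in[0,t]}\|w(s)\|$. Norms are Euclidean / spectral. Network: transmission attempts at $t_k=k\Delta$, $k\in\mathbb N_0$, $\Delta>0$. A Denial-of-Service (DoS) signal is given by a sequence of off/on transition times $h_0<h_1<\dots$ with durations $\tau_n\ge0$; $H_n:=\{h_n\}\cup[h_n,h_n+\tau_n)$. A transmission attempt at $t_k$ fails iff $t_k\in\bigcup_n H_n$; $z_0<z_1<\dots$ denotes the increasing sequence of successful transmission times (which are assumed to exist). Controller: $K$ is a matrix such that $\Phi:=A+BK$ is Hurwitz. $\delta:=\Delta/b$, $b\in\mathbb N_1$; $A_\delta:=e^{A\delta}$, $B_\delta:=\int_0^\delta e^{A\tau}B\,d\tau$; $h\in\mathbb N_1$ is the buffer size. At each $z_m$ the controller computes $\alpha_0(z_m)=y(z_m)$, $u_p(z_m)=K\alpha_p(z_m)$ and $\alpha_{p+1}(z_m)=A_\delta\alpha_p(z_m)+B_\delta u_p(z_m)$ for $p=0,\dots,h-2$, and sends $u_0(z_m),\dots,u_{h-1}(z_m)$ to the actuator buffer. Let $I_p(z_m):=[z_m+p\delta,\min\{z_m+(p+1)\delta,z_{m+1}\})$ for $p=0,\dots,h-2$ and $I_{h-1}(z_m):=[z_m+(h-1)\delta,z_{m+1})$ (possibly empty). The applied input is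 $u(t)=0$ for $t\in[0,z_0)$ and $u(t)=u_p(z_m)$ for $t\in I_p(z_m)$, $p=0,\dots,h-1$. The prediction error is $\phi(t):=\alpha_p(z_m)-x(t)$ for $t\in I_p(z_m)$. Constants: $M$ is any symmetric positive definite matrix and $P$ the solution of $\Phi'P+P\Phi+M=0$; $\gamma_1$ is the smallest eigenvalue of $M$, $\gamma_2:=\|2PBK\|$; $\mu_A$ is the logarithmic norm of $A$, i.e. the largest eigenvalue of $(A+A')/2$. *)

(* Defs.v *)
(* classical real numbers (Reals). Vectors of R^k are modelled as
   [nat -> R] and matrices as [nat -> nat -> R]; only indices below the relevant
   dimension are ever used. *)
From Stdlib Require Import Reals Lra Lia Factorial.
Open Scope R_scope.

Definition vec := nat -> R.
Definition mat := nat -> nat -> R.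

Fixpoint fsum (k : nat) (f : nat -> R) : R :=
  match k with O => 0 | S k' => fsum k' f + f k' end.

Definition mv (c : nat) (M : mat) (v : vec) : vec :=
  fun i => fsum c (fun j => M i j * v j).
Definition mm (k : nat) (M N : mat) : mat :=
  fun i j => fsum k (fun l => M i l * N l j).
Definition madd (M N : mat) : mat := fun i j => M i j + N i j.
Definition mscal (a : R) (M : mat) : mat := fun i j => a * M i j.
Definition mtr (M : mat) : mat := fun i j => M j i.
Definition vadd (u v : vec) : vec := fun i => u i + v i.
Definition vsub (u v : vec) : vec := fun i => u i - v i.
Definition idm : mat := fun i j => if Nat.eqb i j then 1 else 0.

Fixpoint mpow (k : nat) (A : mat) (p : nat) : mat :=
  match p with O => idm | S p' => mm k (mpow k A p') A end.

Definition vnorm (k : nat) (v : vec) : R := sqrt (fsum k (fun i => v i ^ 2)).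
Definition vnonzero (k : nat) (v : vec) : Prop := exists i, (i < k)%nat /\ v i <> 0.

Definition is_spec_norm (r c : nat) (M : mat) (nrm : R) : Prop :=
  is_lub (fun s => exists v, vnorm c v <= 1 /\ s = vnorm r (mv c M v)) nrm.

Definition symmetric (k : nat) (M : mat) : Prop :=
  forall i j, (i < k)%nat -> (j < k)%nat -> M i j = M j i.
Definition pos_def (k : nat) (M : mat) : Prop :=
  symmetric k M /\
  forall v, vnonzero k v -> fsum k (fun i => v i * mv k M v i) > 0.

(* real eigenpair (used for symmetric matrices, whose eigenvalues are all real) *)
Definition real_eigen (k : nat) (M : mat) (l : R) : Prop :=
  exists v, vnonzero k v /\ forall i, (i < k)%nat -> mv k M v i = l * v i.
Definition is_min_eig (k : nat) (M : mat) (g : R) : Prop :=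
  real_eigen k M g /\ forall l, real_eigen k M l -> g <= l.
Definition is_max_eig (k : nat) (M : mat) (g : R) : Prop :=
  real_eigen k M g /\ forall l, real_eigen k M l -> l <= g.

Definition is_log_norm (k : nat) (A : mat) (mu : R) : Prop :=
  is_max_eig k (mscal (/2) (madd A (mtr A))) mu.

(* complex eigenvalue a + i b with eigenvector p + i q *)
Definition complex_eigen (k : nat) (A : mat) (a b : R) : Prop :=
  exists p q : vec, (vnonzero k p \/ vnonzero k q) /\
    forall i, (i < k)%nat ->
      mv k A p i = a * p i - b * q i /\ mv k A q i = b * p i + a * q i.
Definition hurwitz (k : nat) (A : mat) : Prop :=
  forall a b, complex_eigen k A a b -> a < 0.
Definition stabilizable (k l : nat) (A B : mat) : Prop :=
  exists K : mat, hurwitz k (madd A (mm l B K)).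

Definition is_expm (k : nat) (A : mat) (t : R) (E : mat) : Prop :=
  forall i j, (i < k)%nat -> (j < k)%nat ->
    infinite_sum (fun p => t ^ p / INR (fact p) * mpow k A p i j) (E i j).

Definition is_Bdelta (k l : nat) (A B : mat) (delta : R) (Bd : mat) : Prop :=
  exists E : R -> mat, (forall tau, is_expm k A tau (E tau)) /\
    forall i j, (i < k)%nat -> (j < l)%nat ->
      exists pr : Riemann_integrable (fun tau => mm k (E tau) B i j) 0 delta,
        RiemannInt pr = Bd i j.

Definition outer_le (E : R -> Prop) (r : R) : Prop :=
  forall eps, eps > 0 -> exists a b : nat -> R,
    (forall p, a p <= b p) /\
    (forall x, E x -> exists p, a p < x < b p) /\
    (forall K, fsum K (fun p => b p - a p) <= r + eps).
Definition null_set (E : R -> Prop) : Prop := outer_le E 0.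
Definition leb_measurable_set (E : R -> Prop) : Prop :=
  forall (S : R -> Prop) r, outer_le S r ->
    exists r1 r2, r1 + r2 <= r /\
      outer_le (fun x => S x /\ E x) r1 /\ outer_le (fun x => S x /\ ~ E x) r2.
Definition measurable_fun (f : R -> R) : Prop :=
  forall c, leb_measurable_set (fun t => 0 <= t /\ f t > c).
Definition measurable_vfun (k : nat) (f : R -> vec) : Prop :=
  forall i, (i < k)%nat -> measurable_fun (fun t => f t i).
Definition bounded_vfun (k : nat) (f : R -> vec) : Prop :=
  exists c, forall t, 0 <= t -> vnorm k (f t) <= c.

Definition abs_cont_on (f : R -> R) (a b : R) : Prop :=
  forall eps, eps > 0 -> exists eta, eta > 0 /\
    forall (K : nat) (l r : nat -> R),
      (forall p, (p < K)%nat -> a <= l p /\ l p <= r p /\ r p <= b) ->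
      (forall p, (S p < K)%nat -> r p <= l (S p)) ->
      fsum K (fun p => r p - l p) < eta ->
      fsum K (fun p => Rabs (f (r p) - f (l p))) < eps.

Definition is_solution (nx nu : nat) (A B : mat) (u d : R -> vec) (x0 : vec)
  (x : R -> vec) : Prop :=
  (forall i, (i < nx)%nat -> x 0 i = x0 i) /\
  (forall i T, (i < nx)%nat -> 0 <= T -> abs_cont_on (fun s => x s i) 0 T) /\
  null_set (fun t => 0 <= t /\ ~ (forall i, (i < nx)%nat ->
     derivable_pt_lim (fun s => x s i) t
       (mv nx A (x t) i + mv nu B (u t) i + d t i))).

Definition in_dos (h tau : nat -> R) (t : R) : Prop :=
  exists j, t = h j \/ (h j <= t /\ t < h j + tau j).
Definition successful (Delta : R) (h tau : nat -> R) (t : R) : Prop :=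
  exists k : nat, t = INR k * Delta /\ ~ in_dos h tau t.
Definition success_seq (Delta : R) (h tau : nat -> R) (z : nat -> R) : Prop :=
  (forall m, successful Delta h tau (z m)) /\
  (forall m, z m < z (S m)) /\
  (forall t, successful Delta h tau t -> exists m, z m = t).

Fixpoint alpha (nx nu : nat) (Ad Bd K : mat) (y : vec) (p : nat) : vec :=
  match p with
  | O => y
  | S p' => let a := alpha nx nu Ad Bd K y p' in
            vadd (mv nx Ad a) (mv nu Bd (mv nx K a))
  end.

(* ||w(s)|| with w = [d' n']' *)
Definition wnorm (nx : nat) (d nn : R -> vec) (s : R) : R :=
  sqrt (vnorm nx (d s) ^ 2 + vnorm nx (nn s) ^ 2).
Definition is_wsup (nx : nat) (d nn : R -> vec) (t W : R) : Prop :=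
  is_lub (fun r => exists s, 0 <= s <= t /\ r = wnorm nx d nn s) W.

(* Main.v *)
Require Import Defs.
From Stdlib Require Import Reals Lra Lia Psatz FunctionalExtensionality List Classical ClassicalEpsilon Factorial.
Open Scope R_scope.
Import ListNotations.

Lemma fsum_ext k f g : (forall i, (i < k)%nat -> f i = g i) -> fsum k f = fsum k g.
Proof. induction k; simpl; intros H; auto. rewrite IHk by (intros; apply H; lia). rewrite H by lia; auto. Qed.

Lemma fsum_plus k f g : fsum k (fun i => f i + g i) = fsum k f + fsum k g.
Proof. induction k; simpl; [lra|rewrite IHk; lra]. Qed.
Lemma fsum_minus k f g : fsum k (fun i => f i - g i) = fsum k f - fsum k g.
Proof. induction k; simpl; [lra|rewrite IHk; lra]. Qed.
Lemma fsum_scal k c f : fsum k (fun i => c * f i) = c * fsum k f.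
Proof. induction k; simpl; [lra|rewrite IHk; lra]. Qed.
Lemma fsum_0 k : fsum k (fun _ => 0) = 0.
Proof. induction k; simpl; [lra|rewrite IHk; lra]. Qed.
Lemma fsum_le k f g : (forall i, (i < k)%nat -> f i <= g i) -> fsum k f <= fsum k g.
Proof. induction k; simpl; intros H; [lra|]. assert (fsum k f <= fsum k g) by (apply IHk; intros; apply H; lia). specialize (H k ltac:(lia)). lra.
Qed.
Lemma fsum_nonneg k f : (forall i, (i < k)%nat -> 0 <= f i) -> 0 <= fsum k f.
Proof. intros H. rewrite <- (fsum_0 k). apply fsum_le; auto. Qed.
Lemma fsum_swap a b (f : nat -> nat -> R) :
  fsum a (fun i => fsum b (fun j => f i j)) = fsum b (fun j => fsum a (fun i => f i j)).
Proof. induction a; simpl. rewrite fsum_0; auto. rewrite IHa, <- fsum_plus. auto. Qed.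
Lemma fsum_abs k f : Rabs (fsum k f) <= fsum k (fun i => Rabs (f i)).
Proof. induction k; simpl. rewrite Rabs_R0; lra. eapply Rle_trans. apply Rabs_triang. lra. Qed.
Lemma fsum_le_term k f i : (forall j, (j < k)%nat -> 0 <= f j) -> (i < k)%nat -> f i <= fsum k f.
Proof. induction k; simpl; intros H Hi. lia.
  assert (0 <= fsum k f) by (apply fsum_nonneg; intros; apply H; lia).
  destruct (Nat.eq_dec i k). subst. lra. assert (f i <= fsum k f) by (apply IHk; [intros; apply H|]; lia).
  specialize (H k ltac:(lia)). lra. Qed.

Definition dot k (u v : vec) := fsum k (fun i => u i * v i).

Lemma dot_self_nonneg k v : 0 <= dot k v v.
Proof. apply fsum_nonneg; intros; nra. Qed.
Lemma vnorm_dot k v : vnorm k v = sqrt (dot k v v).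
Proof. unfold vnorm, dot. f_equal. apply fsum_ext; intros; ring. Qed.
Lemma vnorm_nonneg k v : 0 <= vnorm k v.
Proof. apply sqrt_pos. Qed.
Lemma vnorm_sq k v : vnorm k v * vnorm k v = dot k v v.
Proof. rewrite vnorm_dot. apply sqrt_sqrt, dot_self_nonneg. Qed.

Lemma dot_sym k u v : dot k u v = dot k v u.
Proof. apply fsum_ext; intros; ring. Qed.

Lemma cauchy_schwarz_sq k u v : dot k u v * dot k u v <= dot k u u * dot k v v.
Proof.
  assert (H : forall t, 0 <= dot k u u + 2 * t * dot k u v + t * t * dot k v v).
  { intro t. assert (0 <= dot k (fun i => u i + t * v i) (fun i => u i + t * v i)) by apply dot_self_nonneg.
    unfold dot in *. replace (fsum k (fun i => u i * u i) + 2 * t * fsum k (fun i => u i * v i) + t * t * fsum k (fun i => v i * v i))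
    with (fsum k (fun i => (u i + t * v i) * (u i + t * v i))); auto.
    rewrite <- !fsum_scal, <- !fsum_plus. apply fsum_ext; intros; ring. }
  assert (Hv := dot_self_nonneg k v). assert (Hu := dot_self_nonneg k u).
  destruct (Req_dec (dot k v v) 0) as [E|E].
  - destruct (Req_dec (dot k u v) 0) as [E2|E2]. rewrite E2, E; lra.
    exfalso. specialize (H (- (dot k u u + 1) / (2 * dot k u v))). rewrite E in H.
    assert (2 * (- (dot k u u + 1) / (2 * dot k u v)) * dot k u v = - (dot k u u + 1)) by (field; auto). lra.
  - set (t := - dot k u v / dot k v v). specialize (H t).
    assert (t * dot k v v = - dot k u v) by (unfold t; field; auto).
    assert (0 <= dot k v v * (dot k u u + 2 * t * dot k u v + t * t * dot k v v)) by (apply Rmult_le_pos; lra).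
    nra.
Qed.

Lemma cauchy_schwarz k u v : dot k u v <= vnorm k u * vnorm k v.
Proof.
  assert (H := cauchy_schwarz_sq k u v). rewrite <- (vnorm_sq k u), <- (vnorm_sq k v) in H.
  assert (0 <= vnorm k u) by apply vnorm_nonneg. assert (0 <= vnorm k v) by apply vnorm_nonneg.
  set (p := vnorm k u * vnorm k v) in *. assert (0 <= p) by (apply Rmult_le_pos; auto).
  replace (vnorm k u * vnorm k u * (vnorm k v * vnorm k v)) with (p * p) in H by (unfold p; ring).
  destruct (Rle_dec (dot k u v) p) as [|n]; auto. exfalso.
  assert (p < dot k u v) by lra. assert (p * p < dot k u v * dot k u v) by (apply Rmult_le_0_lt_compat; lra). lra.
Qed.

Lemma vnorm_le_iff k u c : 0 <= c -> dot k u u <= c * c -> vnorm k u <= c.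
Proof. intros Hc H. rewrite vnorm_dot. rewrite <- (sqrt_square c) by auto. apply sqrt_le_1_alt. lra. Qed.

Lemma vnorm_triang k u v : vnorm k (vadd u v) <= vnorm k u + vnorm k v.
Proof.
  apply vnorm_le_iff. pose proof (vnorm_nonneg k u); pose proof (vnorm_nonneg k v); lra.
  assert (dot k (vadd u v) (vadd u v) = dot k u u + 2 * dot k u v + dot k v v).
  { unfold dot, vadd. rewrite <- !fsum_scal, <- !fsum_plus. apply fsum_ext; intros; ring. }
  rewrite H, <- (vnorm_sq k u), <- (vnorm_sq k v). pose proof (cauchy_schwarz k u v). nra.
Qed.

Lemma vnorm_scal k c v : vnorm k (fun i => c * v i) = Rabs c * vnorm k v.
Proof.
  rewrite !vnorm_dot. unfold dot. replace (fsum k (fun i => c * v i * (c * v i))) with ((c*c) * fsum k (fun i => v i * v i)).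
  rewrite sqrt_mult. rewrite <- sqrt_Rsqr_abs. reflexivity. nra. apply dot_self_nonneg.
  rewrite <- fsum_scal; apply fsum_ext; intros; ring.
Qed.

Lemma vnorm_comp k v i : (i < k)%nat -> Rabs (v i) <= vnorm k v.
Proof. intros Hi. rewrite vnorm_dot. rewrite <- sqrt_Rsqr_abs. apply sqrt_le_1_alt.
  unfold Rsqr, dot. apply (fsum_le_term k (fun i => v i * v i)); auto. intros; nra. Qed.

Lemma vnorm_ext k u v : (forall i, (i < k)%nat -> u i = v i) -> vnorm k u = vnorm k v.
Proof. intros H; unfold vnorm; f_equal; apply fsum_ext; intros; rewrite H; auto. Qed.

Lemma vnorm_opp k v : vnorm k (fun i => - v i) = vnorm k v.
Proof. rewrite <- (Rmult_1_l (vnorm k v)), <- Rabs_R1, <- Rabs_Ropp, <- vnorm_scal. apply vnorm_ext; intros; ring. Qed.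

Lemma vnorm_sub_triang k u v : vnorm k (vsub u v) <= vnorm k u + vnorm k v.
Proof. rewrite <- (vnorm_opp k v). replace (vsub u v) with (vadd u (fun i => - v i)). apply vnorm_triang.
  unfold vsub, vadd. apply FunctionalExtensionality.functional_extensionality; intros; ring. Qed.

Lemma mv_madd k M N v i : mv k (madd M N) v i = mv k M v i + mv k N v i.
Proof. unfold mv, madd. rewrite <- fsum_plus. apply fsum_ext; intros; ring. Qed.
Lemma mv_mm k l M N v i : mv k (mm l M N) v i = mv l M (mv k N v) i.
Proof. unfold mv, mm.
  transitivity (fsum k (fun j => fsum l (fun x => M i x * N x j * v j))).
  apply fsum_ext; intros. rewrite Rmult_comm, <- fsum_scal. apply fsum_ext; intros; ring.
  rewrite fsum_swap. apply fsum_ext; intros. rewrite <- fsum_scal. apply fsum_ext; intros; ring.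
Qed.
Lemma mv_ext k M u v i : (forall j, (j < k)%nat -> u j = v j) -> mv k M u i = mv k M v i.
Proof. intros H; unfold mv; apply fsum_ext; intros; rewrite H; auto. Qed.
Lemma mv_scal k M c v i : mv k M (fun j => c * v j) i = c * mv k M v i.
Proof. unfold mv; rewrite <- fsum_scal; apply fsum_ext; intros; ring. Qed.
Lemma mv_vadd k M u v i : mv k M (vadd u v) i = mv k M u i + mv k M v i.
Proof. unfold mv, vadd; rewrite <- fsum_plus; apply fsum_ext; intros; ring. Qed.
Lemma mv_vsub k M u v i : mv k M (vsub u v) i = mv k M u i - mv k M v i.
Proof. unfold mv, vsub; rewrite <- fsum_minus; apply fsum_ext; intros; ring. Qed.

Lemma vnorm_zero k v : vnorm k v = 0 -> forall i, (i < k)%nat -> v i = 0.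
Proof. intros H i Hi. pose proof (vnorm_comp k v i Hi). rewrite H in H0. pose proof (Rabs_pos (v i)).
  destruct (Req_dec (v i) 0); auto. pose proof (Rabs_pos_lt _ H2). lra. Qed.

Lemma vnorm_zero_vec k : vnorm k (fun _ => 0) = 0.
Proof. unfold vnorm. replace (fsum k (fun _ => 0 ^ 2)) with 0. apply sqrt_0.
  symmetry. transitivity (fsum k (fun _ => 0)). apply fsum_ext; intros; ring. apply fsum_0. Qed.

Lemma vnorm_zero_all k v : (forall i, (i < k)%nat -> v i = 0) -> vnorm k v = 0.
Proof. intros H. rewrite <- (vnorm_zero_vec k). apply vnorm_ext; auto. Qed.

Lemma mv_zero c M v i : (forall j, (j < c)%nat -> v j = 0) -> mv c M v i = 0.
Proof. intros H. unfold mv. transitivity (fsum c (fun _ => 0)). apply fsum_ext; intros; rewrite H; auto; ring. apply fsum_0. Qed.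

Lemma spec_norm_bound r c M nrm v : is_spec_norm r c M nrm ->
  vnorm r (mv c M v) <= nrm * vnorm c v.
Proof.
  intros [Hub _].
  assert (Hn : 0 <= nrm).
  { apply Hub. exists (fun _ => 0). split. rewrite vnorm_zero_vec; lra.
    symmetry; apply vnorm_zero_all; intros; apply mv_zero; auto. }
  destruct (Req_dec (vnorm c v) 0) as [E|E].
  - rewrite E, Rmult_0_r. replace (vnorm r (mv c M v)) with 0. lra.
    symmetry; apply vnorm_zero_all; intros; apply mv_zero; auto. apply vnorm_zero; auto.
  - pose proof (vnorm_nonneg c v). set (s := vnorm c v) in *.
    assert (H1 : vnorm r (mv c M (fun j => / s * v j)) <= nrm).
    { apply Hub. exists (fun j => / s * v j). split; auto. rewrite vnorm_scal. fold s.
      rewrite Rabs_right. right; field; auto. apply Rle_ge, Rlt_le, Rinv_0_lt_compat; lra. }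
    replace (vnorm r (mv c M (fun j => / s * v j))) with (/ s * vnorm r (mv c M v)) in H1.
    apply Rmult_le_compat_l with (r := s) in H1; [|lra]. rewrite <- Rmult_assoc, Rinv_r in H1 by auto. lra.
    rewrite (vnorm_ext r (mv c M (fun j => / s * v j)) (fun i => / s * mv c M v i)) by (intros; apply mv_scal).
    rewrite vnorm_scal, Rabs_right; auto. apply Rle_ge, Rlt_le, Rinv_0_lt_compat; lra.
Qed.

Lemma ac_restrict f a b a' b' : a <= a' -> b' <= b -> abs_cont_on f a b -> abs_cont_on f a' b'.
Proof. intros H1 H2 H eps He. destruct (H eps He) as [eta [Heta Hf]]. exists eta; split; auto.
  intros K l r Hlr Hs Hsum. apply Hf; auto. intros p Hp; destruct (Hlr p Hp); lra. Qed.

Lemma ac_lip f a b L : 0 <= L -> (forall l r, a <= l -> l <= r -> r <= b -> Rabs (f r - f l) <= L * (r - l)) ->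
  abs_cont_on f a b.
Proof. intros HL H eps He. exists (eps / (L + 1)). split. apply Rdiv_lt_0_compat; lra.
  intros K l r Hlr Hs Hsum.
  apply Rle_lt_trans with (fsum K (fun p => L * (r p - l p))).
  apply fsum_le; intros p Hp; destruct (Hlr p Hp) as [? []]; apply H; lra.
  rewrite fsum_scal. assert (0 <= fsum K (fun p => r p - l p)) by (apply fsum_nonneg; intros p Hp; destruct (Hlr p Hp); lra).
  apply Rle_lt_trans with ((L+1) * fsum K (fun p => r p - l p)). nra.
  apply Rmult_lt_compat_l with (r := L + 1) in Hsum; [|lra]. replace ((L + 1) * (eps / (L + 1))) with eps in Hsum by (field; lra). lra.
Qed.

Lemma ac_const c a b : abs_cont_on (fun _ => c) a b.
Proof. apply ac_lip with 0; [lra|]. intros. replace (c - c) with 0 by ring. rewrite Rabs_R0; lra. Qed.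

Lemma ac_lin f g c1 c2 a b : abs_cont_on f a b -> abs_cont_on g a b -> abs_cont_on (fun t => c1 * f t + c2 * g t) a b.
Proof.
  intros Hf Hg eps He.
  destruct (Hf (eps / (2 * (Rabs c1 + 1)))) as [e1 [He1 H1]]. apply Rdiv_lt_0_compat; [lra|]. pose proof (Rabs_pos c1); lra.
  destruct (Hg (eps / (2 * (Rabs c2 + 1)))) as [e2 [He2 H2]]. apply Rdiv_lt_0_compat; [lra|]. pose proof (Rabs_pos c2); lra.
  exists (Rmin e1 e2). split. apply Rmin_glb_lt; auto.
  intros K l r Hlr Hs Hsum.
  assert (S1 := H1 K l r Hlr Hs ltac:(pose proof (Rmin_l e1 e2); lra)).
  assert (S2 := H2 K l r Hlr Hs ltac:(pose proof (Rmin_r e1 e2); lra)).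
  apply Rle_lt_trans with (Rabs c1 * fsum K (fun p => Rabs (f (r p) - f (l p))) + Rabs c2 * fsum K (fun p => Rabs (g (r p) - g (l p)))).
  rewrite <- !fsum_scal, <- fsum_plus. apply fsum_le; intros.
  replace (c1 * f (r i) + c2 * g (r i) - (c1 * f (l i) + c2 * g (l i))) with (c1 * (f (r i) - f (l i)) + c2 * (g (r i) - g (l i))) by ring.
  eapply Rle_trans. apply Rabs_triang. rewrite !Rabs_mult; lra.
  pose proof (Rabs_pos c1); pose proof (Rabs_pos c2).
  assert (0 <= fsum K (fun p => Rabs (f (r p) - f (l p)))) by (apply fsum_nonneg; intros; apply Rabs_pos).
  assert (0 <= fsum K (fun p => Rabs (g (r p) - g (l p)))) by (apply fsum_nonneg; intros; apply Rabs_pos).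
  assert (Rabs c1 * fsum K (fun p => Rabs (f (r p) - f (l p))) <= eps / 2).
  { apply Rle_trans with ((Rabs c1 + 1) * (eps / (2 * (Rabs c1 + 1)))). apply Rmult_le_compat; lra.
    right; field; lra. }
  assert (Rabs c2 * fsum K (fun p => Rabs (g (r p) - g (l p))) <= eps / 2).
  { apply Rle_trans with ((Rabs c2 + 1) * (eps / (2 * (Rabs c2 + 1)))). apply Rmult_le_compat; lra.
    right; field; lra. }
  assert (Rabs c1 * fsum K (fun p => Rabs (f (r p) - f (l p))) < eps / 2).
  { apply Rle_lt_trans with ((Rabs c1 + 1) * fsum K (fun p => Rabs (f (r p) - f (l p)))). nra.
    apply Rlt_le_trans with ((Rabs c1 + 1) * (eps / (2 * (Rabs c1 + 1)))). apply Rmult_lt_compat_l; lra.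
    right; field; lra. }
  lra.
Qed.

Lemma ac_ext f g a b : (forall t, a <= t <= b -> f t = g t) -> abs_cont_on f a b -> abs_cont_on g a b.
Proof. intros E H eps He. destruct (H eps He) as [eta [Heta Hf]]. exists eta; split; auto.
  intros K l r Hlr Hs Hsum. erewrite fsum_ext. apply (Hf K l r Hlr Hs Hsum). intros p Hp. destruct (Hlr p Hp) as [? []].
  rewrite !E by lra. auto. Qed.

Lemma ac_plus f g a b : abs_cont_on f a b -> abs_cont_on g a b -> abs_cont_on (fun t => f t + g t) a b.
Proof. intros. apply ac_ext with (fun t => 1 * f t + 1 * g t). intros; ring. apply ac_lin; auto. Qed.
Lemma ac_minus f g a b : abs_cont_on f a b -> abs_cont_on g a b -> abs_cont_on (fun t => f t - g t) a b.
Proof. intros. apply ac_ext with (fun t => 1 * f t + (-1) * g t). intros; ring. apply ac_lin; auto. Qed.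
Lemma ac_scal f c a b : abs_cont_on f a b -> abs_cont_on (fun t => c * f t) a b.
Proof. intros. apply ac_ext with (fun t => c * f t + 0 * f t). intros; ring. apply ac_lin; auto. Qed.

Lemma ac_step f a b eta : abs_cont_on f a b -> (forall K l r,
      (forall p, (p < K)%nat -> a <= l p /\ l p <= r p /\ r p <= b) ->
      (forall p, (S p < K)%nat -> r p <= l (S p)) ->
      fsum K (fun p => r p - l p) < eta ->
      fsum K (fun p => Rabs (f (r p) - f (l p))) < 1) ->
  forall s t, a <= s -> s <= t -> t <= b -> t - s < eta -> Rabs (f t - f s) < 1.
Proof. intros _ H s t H1 H2 H3 H4. specialize (H 1%nat (fun _ => s) (fun _ => t)). simpl in H.
  assert (0 + Rabs (f t - f s) < 1). apply H. intros p Hp; lra. intros; lia. lra. lra. Qed.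

Lemma ac_bounded f a b : abs_cont_on f a b -> a <= b -> exists M, forall t, a <= t <= b -> Rabs (f t) <= M.
Proof.
  intros H Hab. destruct (H 1 ltac:(lra)) as [eta [Heta Hf]].
  assert (Hs := ac_step f a b eta H Hf).
  assert (Hn : forall n : nat, forall t, a <= t <= b -> t <= a + INR n * (eta / 2) -> Rabs (f t - f a) <= INR n).
  { induction n; intros t Ht Htn.
    - simpl in Htn. replace t with a by lra. replace (f a - f a) with 0 by ring. rewrite Rabs_R0; simpl; lra.
    - rewrite S_INR in *. destruct (Rle_dec t (a + INR n * (eta / 2))).
      + specialize (IHn t Ht r). lra.
      + set (t' := a + INR n * (eta / 2)). assert (0 <= INR n) by apply pos_INR.
        assert (a <= t') by (unfold t'; nra).
        assert (t' < t) by (apply Rnot_le_lt; auto).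
        assert (Ht' : a <= t' <= b) by lra.
        specialize (IHn t' Ht' (Rle_refl _)).
        assert (Rabs (f t - f t') < 1) by (apply Hs; unfold t' in *; lra).
        replace (f t - f a) with ((f t - f t') + (f t' - f a)) by ring.
        eapply Rle_trans. apply Rabs_triang. lra. }
  destruct (archimed ((b - a) / (eta / 2))) as [Hup _].
  assert (0 <= up ((b - a) / (eta / 2)))%Z.
  { apply le_IZR. assert (0 <= (b - a) / (eta / 2)) by (apply Rmult_le_pos; [lra| apply Rlt_le, Rinv_0_lt_compat; lra]). lra. }
  exists (Rabs (f a) + IZR (up ((b - a) / (eta / 2)))). intros t Ht.
  destruct (IZN _ H0) as [n En]. rewrite En in *. rewrite <- INR_IZR_INZ in *.
  assert (Rabs (f t - f a) <= INR n).
  { apply Hn; auto. apply Rlt_le in Hup. apply Rmult_le_compat_r with (r := eta / 2) in Hup; [|lra].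
    unfold Rdiv in Hup at 1. rewrite Rmult_assoc, Rinv_l in Hup by lra. lra. }
  replace (f t) with ((f t - f a) + f a) by ring. eapply Rle_trans. apply Rabs_triang. lra.
Qed.

Lemma ac_dom h f g c1 c2 a b : 0 <= c1 -> 0 <= c2 -> abs_cont_on f a b -> abs_cont_on g a b ->
  (forall l r, a <= l -> l <= r -> r <= b -> Rabs (h r - h l) <= c1 * Rabs (f r - f l) + c2 * Rabs (g r - g l)) ->
  abs_cont_on h a b.
Proof.
  intros Hc1 Hc2 Hf Hg Hd eps He.
  destruct (Hf (eps / (2 * (c1 + 1)))) as [e1 [He1 H1]]. apply Rdiv_lt_0_compat; lra.
  destruct (Hg (eps / (2 * (c2 + 1)))) as [e2 [He2 H2]]. apply Rdiv_lt_0_compat; lra.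
  exists (Rmin e1 e2). split. apply Rmin_glb_lt; auto.
  intros K l r Hlr Hs Hsum.
  assert (S1 := H1 K l r Hlr Hs ltac:(pose proof (Rmin_l e1 e2); lra)).
  assert (S2 := H2 K l r Hlr Hs ltac:(pose proof (Rmin_r e1 e2); lra)).
  apply Rle_lt_trans with (c1 * fsum K (fun p => Rabs (f (r p) - f (l p))) + c2 * fsum K (fun p => Rabs (g (r p) - g (l p)))).
  rewrite <- !fsum_scal, <- fsum_plus. apply fsum_le; intros. destruct (Hlr i H) as [? []]. apply Hd; auto.
  assert (0 <= fsum K (fun p => Rabs (f (r p) - f (l p)))) by (apply fsum_nonneg; intros; apply Rabs_pos).
  assert (0 <= fsum K (fun p => Rabs (g (r p) - g (l p)))) by (apply fsum_nonneg; intros; apply Rabs_pos).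
  assert (c1 * fsum K (fun p => Rabs (f (r p) - f (l p))) < eps / 2).
  { apply Rle_lt_trans with ((c1 + 1) * fsum K (fun p => Rabs (f (r p) - f (l p)))). nra.
    apply Rlt_le_trans with ((c1 + 1) * (eps / (2 * (c1 + 1)))). apply Rmult_lt_compat_l; lra.
    right; field; lra. }
  assert (c2 * fsum K (fun p => Rabs (g (r p) - g (l p))) < eps / 2).
  { apply Rle_lt_trans with ((c2 + 1) * fsum K (fun p => Rabs (g (r p) - g (l p)))). nra.
    apply Rlt_le_trans with ((c2 + 1) * (eps / (2 * (c2 + 1)))). apply Rmult_lt_compat_l; lra.
    right; field; lra. }
  lra.
Qed.

Lemma ac_mult f g a b : a <= b -> abs_cont_on f a b -> abs_cont_on g a b -> abs_cont_on (fun t => f t * g t) a b.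
Proof.
  intros Hab Hf Hg. destruct (ac_bounded f a b Hf Hab) as [Mf HMf]. destruct (ac_bounded g a b Hg Hab) as [Mg HMg].
  assert (0 <= Mf) by (specialize (HMf a ltac:(lra)); pose proof (Rabs_pos (f a)); lra).
  assert (0 <= Mg) by (specialize (HMg a ltac:(lra)); pose proof (Rabs_pos (g a)); lra).
  apply ac_dom with f g Mg Mf; auto. intros l r H1 H2 H3.
  replace (f r * g r - f l * g l) with (f r * (g r - g l) + g l * (f r - f l)) by ring.
  eapply Rle_trans. apply Rabs_triang. rewrite !Rabs_mult.
  specialize (HMf r ltac:(lra)). specialize (HMg l ltac:(lra)).
  pose proof (Rabs_pos (g r - g l)). pose proof (Rabs_pos (f r - f l)).
  assert (Rabs (f r) * Rabs (g r - g l) <= Mf * Rabs (g r - g l)) by (apply Rmult_le_compat_r; auto).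
  assert (Rabs (g l) * Rabs (f r - f l) <= Mg * Rabs (f r - f l)) by (apply Rmult_le_compat_r; auto).
  lra.
Qed.

Lemma ac_comp_lip (phi : R -> R) f a b L : 0 <= L -> abs_cont_on f a b ->
  (forall t, a <= t <= b -> 0 <= f t) ->
  (forall x y, 0 <= x -> 0 <= y -> Rabs (phi x - phi y) <= L * Rabs (x - y)) ->
  abs_cont_on (fun t => phi (f t)) a b.
Proof.
  intros HL Hf Hpos Hphi. apply ac_dom with f f L 0; auto; try lra. intros l r H1 H2 H3.
  rewrite Rmult_0_l, Rplus_0_r. apply Hphi; apply Hpos; lra.
Qed.

Lemma ac_fsum n (F : nat -> R -> R) a b : (forall i, (i < n)%nat -> abs_cont_on (F i) a b) ->
  abs_cont_on (fun t => fsum n (fun i => F i t)) a b.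
Proof. induction n; intros H; simpl. apply ac_const. apply ac_plus. apply IHn; intros; apply H; lia. apply H; lia. Qed.

Fixpoint chain (P : R -> R -> R -> Prop) (s e : R) (L : list (R*R*R)) : Prop :=
  match L with
  | nil => s = e
  | (l, t, r) :: L' => l = s /\ l <= t /\ t <= r /\ P l t r /\ chain P r e L'
  end.

Lemma chain_app P a s e L1 L2 : chain P a s L1 -> chain P s e L2 -> chain P a e (L1 ++ L2).
Proof. revert a. induction L1 as [|[[l t] r] L1 IH]; simpl; intros a H1 H2. subst; auto.
  destruct H1 as [? [? [? [? ?]]]]. repeat split; auto. Qed.

Lemma cousin (P : R -> R -> R -> Prop) a b : a <= b ->
  (forall t, a <= t <= b -> exists rho, rho > 0 /\ forall l r, l <= t -> t <= r -> t - rho < l -> r < t + rho -> P l t r) ->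
  exists L, chain P a b L.
Proof.
  intros Hab HP.
  set (E := fun s => a <= s <= b /\ exists L, chain P a s L).
  assert (HE : exists x, E x) by (exists a; split; [lra| exists nil; simpl; auto]).
  assert (Hb : bound E) by (exists b; intros x [Hx _]; lra).
  destruct (completeness E Hb HE) as [c [Hub Hlub]].
  assert (Hac : a <= c) by (apply Hub; split; [lra|exists nil; simpl; auto]).
  assert (Hcb : c <= b) by (apply Hlub; intros x [Hx _]; lra).
  destruct (HP c ltac:(lra)) as [rho [Hrho Hc]].
  assert (Hs : exists s, E s /\ c - rho < s).
  { apply NNPP. intros Hn. assert (c <= c - rho). apply Hlub. intros x Hx.
    destruct (Rle_dec x (c - rho)); auto. exfalso; apply Hn; exists x; split; auto; lra. lra. }
  destruct Hs as [s [[Hs1 [L HL]] Hs2]].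
  assert (Hsc : s <= c) by (apply Hub; split; auto; exists L; auto).
  set (c' := Rmin b (c + rho / 2)).
  assert (Hc'1 : c <= c') by (unfold c'; apply Rmin_glb; lra).
  assert (Hc'2 : c' <= b) by (unfold c'; apply Rmin_l).
  assert (Hc'3 : c' <= c + rho / 2) by (unfold c'; apply Rmin_r).
  assert (HEc' : E c').
  { split. lra. exists (L ++ [(s, c, c')]). apply chain_app with s; auto. simpl. repeat split; auto; try lra.
    apply Hc; lra. }
  assert (c' <= c) by (apply Hub; auto).
  assert (c' = b). { unfold c' in *. destruct (Rle_dec b (c + rho / 2)). rewrite Rmin_left in *; auto.
    rewrite Rmin_right in *; lra. }
  rewrite <- H0. destruct HEc' as [_ [L' HL']]. exists L'; auto.
Qed.

Fixpoint sorted_iv (B : list (R*R*nat)) : Prop :=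
  match B with
  | nil => True
  | (l, r, p) :: B' => l <= r /\ Forall (fun q => r <= fst (fst q)) B' /\ sorted_iv B'
  end.

Fixpoint lsum (g : R*R*nat -> R) (B : list (R*R*nat)) : R :=
  match B with nil => 0 | x :: B' => g x + lsum g B' end.

Definition ivlen (x : R*R*nat) : R := snd (fst x) - fst (fst x).

Lemma sorted_in_interval B lo hi : sorted_iv B -> lo <= hi ->
  Forall (fun q => lo <= fst (fst q) /\ snd (fst q) <= hi) B -> lsum ivlen B <= hi - lo.
Proof.
  revert lo. induction B as [|[[l r] p] B IH]; simpl; intros lo Hs Hlh HF. lra.
  destruct Hs as [Hlr [HF2 Hs]]. inversion HF; subst. simpl in H1. destruct H1.
  assert (lsum ivlen B <= hi - r). { apply IH; [auto| lra |].
    rewrite Forall_forall in *. intros x Hx. split. apply HF2; auto. apply H2; auto. }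
  unfold ivlen at 1; simpl. lra.
Qed.

Lemma Forall_filter_intro {A} (P : A -> Prop) f (L : list A) : Forall P L -> Forall P (filter f L).
Proof. rewrite !Forall_forall. intros H x Hx. apply filter_In in Hx. apply H; tauto. Qed.

Lemma sorted_filter f B : sorted_iv B -> sorted_iv (filter f B).
Proof. induction B as [|[[l r] p] B IH]; simpl; auto. intros [H1 [H2 H3]].
  destruct (f (l, r, p)); simpl; auto. repeat split; auto. apply Forall_filter_intro; auto. Qed.

Lemma lsum_filter g f B : lsum g B = lsum g (filter f B) + lsum g (filter (fun x => negb (f x)) B).
Proof. induction B; simpl; auto. lra. destruct (f a); simpl; lra. Qed.

Lemma group_len (al be : nat -> R) Kmax B : sorted_iv B -> (forall p, al p <= be p) ->
  Forall (fun q => (snd q < Kmax)%nat /\ al (snd q) < fst (fst q) /\ snd (fst q) < be (snd q)) B ->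
  lsum ivlen B <= fsum Kmax (fun p => be p - al p).
Proof.
  revert B. induction Kmax; intros B Hs Hab HF.
  - destruct B. simpl; lra. inversion HF; lia.
  - simpl. rewrite (lsum_filter ivlen (fun x => Nat.eqb (snd x) Kmax)).
    assert (lsum ivlen (filter (fun x => negb (Nat.eqb (snd x) Kmax)) B) <= fsum Kmax (fun p => be p - al p)).
    { apply IHKmax. apply sorted_filter; auto. auto. rewrite Forall_forall in *. intros x Hx.
      apply filter_In in Hx. destruct Hx as [Hx1 Hx2]. destruct (HF x Hx1) as [? ?]. split; auto.
      apply Bool.negb_true_iff, Nat.eqb_neq in Hx2. lia. }
    assert (lsum ivlen (filter (fun x => Nat.eqb (snd x) Kmax) B) <= be Kmax - al Kmax).
    { apply sorted_in_interval. apply sorted_filter; auto. specialize (Hab Kmax); lra.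
      rewrite Forall_forall in *. intros x Hx.
      apply filter_In in Hx. destruct Hx as [Hx1 Hx2]. apply Nat.eqb_eq in Hx2. destruct (HF x Hx1) as [? [? ?]].
      rewrite Hx2 in *. lra. }
    lra.
Qed.

Lemma fsum_shift k f : fsum (S k) f = f O + fsum k (fun p => f (S p)).
Proof. induction k; simpl in *. lra. rewrite IHk. lra. Qed.

Lemma fsum_lsum g B d : fsum (length B) (fun p => g (nth p B d)) = lsum g B.
Proof. induction B; [reflexivity|]. change (length (a::B)) with (S (length B)). rewrite fsum_shift.
  simpl nth. rewrite IHB. reflexivity. Qed.

Lemma sorted_nth B d p : sorted_iv B -> (S p < length B)%nat ->
  snd (fst (nth p B d)) <= fst (fst (nth (S p) B d)).
Proof. revert p. induction B as [|[[l r] q] B IH]; simpl; intros p Hs Hp. lia.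
  destruct Hs as [_ [HF Hs]]. destruct p.
  - destruct B. simpl in Hp; lia. simpl. inversion HF; auto.
  - apply IH; auto. lia. Qed.

Lemma chain_le P s e L : chain P s e L -> s <= e.
Proof. revert s. induction L as [|[[l t] r] L IH]; simpl; intros s H. lra. destruct H as [? [? [? [? ?]]]].
  apply IH in H3. lra. Qed.

Lemma lsum_le g h B : Forall (fun q => g q <= h q) B -> lsum g B <= lsum h B.
Proof. induction B; simpl; intros H. lra. inversion H; subst. apply IHB in H3. lra. Qed.

Lemma build_bad (F : R -> R) (eps : R) (al be : nat -> R) s e L : 0 <= eps ->
  chain (fun l t r => F r - F l <= eps * (r - l) \/ exists p, al p < l /\ r < be p) s e L ->
  exists B, sorted_iv B /\
    Forall (fun q => s <= fst (fst q) /\ fst (fst q) <= snd (fst q) /\ snd (fst q) <= e /\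
                     al (snd q) < fst (fst q) /\ snd (fst q) < be (snd q)) B /\
    F e - F s <= eps * (e - s) + lsum (fun q => F (snd (fst q)) - F (fst (fst q))) B.
Proof.
  intros Heps. revert s. induction L as [|[[l t] r] L IH]; simpl; intros s H.
  - subst. exists nil. simpl. repeat split; auto. lra.
  - destruct H as [E [H1 [H2 [HP Hc]]]]. subst l. assert (Hre := chain_le _ _ _ _ Hc).
    destruct (IH r Hc) as [B [Hs [HF Hsum]]].
    destruct HP as [HP | [p [Hp1 Hp2]]].
    + exists B. repeat split; auto.
      * rewrite Forall_forall in *. intros x Hx. destruct (HF x Hx) as [? [? [? [? ?]]]]. repeat split; auto; lra.
      * nra.
    + exists ((s, r, p) :: B). simpl. repeat split; try lra.
      * rewrite Forall_forall in *. intros x Hx. apply HF; auto.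
      * auto.
      * constructor. simpl. repeat split; lra.
        rewrite Forall_forall in *. intros x Hx. destruct (HF x Hx) as [? [? [? [? ?]]]]. repeat split; auto; lra.
      * nra.
Qed.

Definition maxidx (B : list (R*R*nat)) : nat := fold_right (fun x m => Nat.max (snd x) m) O B.
Lemma maxidx_ge B : Forall (fun q => (snd q <= maxidx B)%nat) B.
Proof. induction B; simpl; constructor. lia. eapply Forall_impl; [|apply IHB]. intros; simpl in *; lia. Qed.

Lemma core_ineq F a b N eps : a <= b -> eps > 0 -> abs_cont_on F a b -> null_set N ->
  (forall t, a <= t < b -> ~ N t -> exists D, derivable_pt_lim F t D /\ D <= 0) ->
  F b - F a <= eps * (b - a) + eps.
Proof.
  intros Hab He Hac HN Hd.
  destruct (Hac eps He) as [eta [Heta Hf]].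
  destruct (HN (eta / 4) ltac:(lra)) as [al [be [Halbe [Hcov Hsum]]]].
  set (al' := fun p => match p with O => b - eta / 8 | S q => al q end).
  set (be' := fun p => match p with O => b + eta / 8 | S q => be q end).
  set (P := fun l (t : R) r => F r - F l <= eps * (r - l) \/ exists p, al' p < l /\ r < be' p).
  assert (Hch : exists L, chain P a b L).
  { apply cousin; auto. intros t Ht.
    destruct (classic (t < b /\ ~ N t)) as [[Htb HNt] | Hbad].
    - destruct (Hd t ltac:(lra) HNt) as [D [HD HD0]].
      destruct (HD eps He) as [delta Hdelta].
      exists delta. split. apply cond_pos. intros l r Hl Hr H1 H2. left.
      assert (F r - F t <= eps * (r - t)).
      { destruct (Req_dec r t) as [E|E]. subst; lra.
        specialize (Hdelta (r - t) ltac:(lra) ltac:(rewrite Rabs_right; lra)).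
        replace (t + (r - t)) with r in Hdelta by ring.
        apply Rabs_def2 in Hdelta. destruct Hdelta as [Hq _].
        assert ((F r - F t) / (r - t) < eps) by lra.
        apply Rmult_lt_compat_r with (r := r - t) in H; [|lra]. unfold Rdiv in H.
        rewrite Rmult_assoc, Rinv_l in H by lra. lra. }
      assert (F t - F l <= eps * (t - l)).
      { destruct (Req_dec l t) as [E|E]. subst; lra.
        specialize (Hdelta (l - t) ltac:(lra) ltac:(rewrite Rabs_left; lra)).
        replace (t + (l - t)) with l in Hdelta by ring.
        apply Rabs_def2 in Hdelta. destruct Hdelta as [Hq _].
        assert ((F l - F t) / (l - t) < eps) by lra.
        apply Rmult_lt_compat_r with (r := t - l) in H0; [|lra].
        replace ((F l - F t) / (l - t) * (t - l)) with (F t - F l) in H0 by (field; lra). lra. }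
      lra.
    - assert (exists p, al' p < t < be' p) as [p Hp].
      { destruct (Req_dec t b) as [E|E]. exists O; simpl; lra.
        assert (N t) by (apply NNPP; intros HNt; apply Hbad; split; auto; lra).
        destruct (Hcov t H) as [p Hp]. exists (S p); simpl; auto. }
      exists (Rmin (t - al' p) (be' p - t)). split. apply Rmin_glb_lt; lra.
      intros l r Hl Hr H1 H2. right. exists p. pose proof (Rmin_l (t - al' p) (be' p - t)).
      pose proof (Rmin_r (t - al' p) (be' p - t)). split; lra. }
  destruct Hch as [L HL].
  destruct (build_bad F eps al' be' a b L ltac:(lra) HL) as [B [Hs [HF Hsumb]]].
  assert (Hlen : lsum ivlen B <= eta / 2).
  { apply Rle_trans with (fsum (S (maxidx B)) (fun p => be' p - al' p)).
    apply group_len; auto. intros [|p]; simpl. lra. apply Halbe.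
    pose proof (maxidx_ge B). rewrite Forall_forall in *. intros x Hx. specialize (HF x Hx). specialize (H x Hx).
    split. lia. tauto.
    rewrite fsum_shift. simpl. specialize (Hsum (maxidx B)). lra. }
  set (d := (0, 0, O) : R*R*nat).
  assert (Hac2 : fsum (length B) (fun p => Rabs (F (snd (fst (nth p B d))) - F (fst (fst (nth p B d))))) < eps).
  { apply Hf.
    - intros p Hp. rewrite Forall_forall in HF. specialize (HF (nth p B d) (nth_In _ _ Hp)). lra.
    - intros p Hp. apply sorted_nth; auto.
    - rewrite (fsum_lsum (fun q => snd (fst q) - fst (fst q))). fold ivlen. lra. }
  rewrite (fsum_lsum (fun q => Rabs (F (snd (fst q)) - F (fst (fst q))))) in Hac2.
  assert (lsum (fun q => F (snd (fst q)) - F (fst (fst q))) B <= lsum (fun q => Rabs (F (snd (fst q)) - F (fst (fst q)))) B).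
  { apply lsum_le. rewrite Forall_forall. intros; apply Rle_abs. }
  lra.
Qed.

Lemma ac_nonincr F a b N : a <= b -> abs_cont_on F a b -> null_set N ->
  (forall t, a <= t < b -> ~ N t -> exists D, derivable_pt_lim F t D /\ D <= 0) ->
  F b <= F a.
Proof.
  intros Hab Hac HN Hd. destruct (Rle_dec (F b) (F a)) as [|Hn]; auto. exfalso.
  set (eps := (F b - F a) / (2 * (b - a + 1))).
  assert (He : eps > 0) by (unfold eps; apply Rdiv_lt_0_compat; lra).
  pose proof (core_ineq F a b N eps Hab He Hac HN Hd).
  assert (eps * (b - a) + eps = (F b - F a) / 2) by (unfold eps; field; lra). lra.
Qed.

Lemma cv_const c : Un_cv (fun _ => c) c.
Proof. intros e He. exists O. intros. replace (c - c) with 0 by ring. rewrite R_dist_eq. lra. Qed.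

Lemma cv_subseq u l phi : (forall n, (phi n < phi (S n))%nat) -> Un_cv u l -> Un_cv (fun n => u (phi n)) l.
Proof. intros Hphi H e He. destruct (H e He) as [N HN]. exists N. intros n Hn. apply HN.
  assert (forall n, (n <= phi n)%nat). { induction n0. lia. specialize (Hphi n0). lia. }
  specialize (H0 n). lia. Qed.

Lemma cv_le u l c : Un_cv u l -> (forall n, u n <= c) -> l <= c.
Proof. intros H Hc. destruct (Rle_dec l c); auto. exfalso. destruct (H (l - c) ltac:(lra)) as [N HN].
  specialize (HN N (le_n _)). specialize (Hc N). unfold R_dist in HN. apply Rabs_def2 in HN. lra. Qed.
Lemma cv_ge u l c : Un_cv u l -> (forall n, c <= u n) -> c <= l.
Proof. intros H Hc. destruct (Rle_dec c l); auto. exfalso. destruct (H (c - l) ltac:(lra)) as [N HN].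
  specialize (HN N (le_n _)). specialize (Hc N). unfold R_dist in HN. apply Rabs_def2 in HN. lra. Qed.

Lemma bw1 (u : nat -> R) : (forall n, -1 <= u n <= 1) ->
  exists phi l, (forall n, (phi n < phi (S n))%nat) /\ Un_cv (fun n => u (phi n)) l.
Proof.
  intros Hu. destruct (Bolzano_Weierstrass u _ (compact_P3 (-1) 1) Hu) as [l Hl].
  assert (H : forall N m : nat, {p | (N <= p)%nat /\ Rabs (u p - l) < / INR (S m)}).
  { intros N m. apply constructive_indefinite_description.
    assert (Hpos : 0 < / INR (S m)) by (apply Rinv_0_lt_compat, lt_0_INR; lia).
    destruct (Hl (disc l (mkposreal _ Hpos)) N) as [p [Hp1 Hp2]].
    exists (mkposreal _ Hpos). intros y Hy; auto. exists p; split; auto. }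
  set (phi := fix f n := match n with O => proj1_sig (H O O) | S n' => proj1_sig (H (S (f n')) (S n')) end).
  exists phi, l. split.
  - intros n. simpl. destruct (H (S (phi n)) (S n)) as [p [Hp1 Hp2]]. simpl. lia.
  - intros e He. destruct (archimed (/ e)) as [Hup _].
    assert (Hz : (0 <= up (/ e))%Z) by (apply le_IZR; pose proof (Rinv_0_lt_compat e He); lra).
    destruct (IZN _ Hz) as [N EN]. rewrite EN, <- INR_IZR_INZ in Hup.
    exists N. intros n Hn. unfold R_dist.
    assert (Hb : Rabs (u (phi n) - l) < / INR (S n)).
    { destruct n; simpl. destruct (H O O) as [p [Hp0 Hp]]; simpl; auto.
      destruct (H (S (phi n)) (S n)) as [p [Hp0 Hp]]; simpl; auto. }
    eapply Rlt_le_trans; [apply Hb|].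
    assert (INR N < INR (S n)) by (apply lt_INR; lia).
    rewrite <- (Rinv_inv e). apply Rinv_le_contravar. apply Rinv_0_lt_compat; lra. lra.
Qed.

Lemma bwk (v : nat -> vec) m : (forall n j, (j < m)%nat -> -1 <= v n j <= 1) ->
  exists phi (w : vec), (forall n, (phi n < phi (S n))%nat) /\ forall j, (j < m)%nat -> Un_cv (fun n => v (phi n) j) (w j).
Proof.
  induction m; intros Hv.
  - exists (fun n => n), (fun _ => 0). split. intros; lia. intros; lia.
  - destruct IHm as [phi [w [Hphi Hw]]]. intros; apply Hv; lia.
    destruct (bw1 (fun n => v (phi n) m)) as [psi [l [Hpsi Hl]]]. intros; apply Hv; lia.
    exists (fun n => phi (psi n)), (fun j => if Nat.eqb j m then l else w j). split.
    + intros n. assert (forall a b, (a < b)%nat -> (phi a < phi b)%nat).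
      { intros a b Hab. induction Hab. apply Hphi. specialize (Hphi m0). lia. }
      apply H, Hpsi.
    + intros j Hj. destruct (Nat.eqb_spec j m). subst; auto.
      apply (cv_subseq (fun n => v (phi n) j)); auto. apply Hw; lia.
Qed.

Lemma cv_fsum m (F : nat -> nat -> R) (L : nat -> R) :
  (forall j, (j < m)%nat -> Un_cv (fun n => F n j) (L j)) -> Un_cv (fun n => fsum m (F n)) (fsum m L).
Proof. induction m; intros H; simpl. apply cv_const. apply CV_plus. apply IHm; intros; apply H; lia. apply H; lia. Qed.

Definition qf k (S : mat) (v : vec) := dot k v (mv k S v).

Lemma qf_cv k S (v : nat -> vec) w : (forall j, (j < k)%nat -> Un_cv (fun n => v n j) (w j)) ->
  Un_cv (fun n => qf k S (v n)) (qf k S w).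
Proof. intros H. unfold qf, dot, mv. apply cv_fsum. intros i Hi. apply CV_mult. auto.
  apply cv_fsum. intros j Hj. apply CV_mult. apply cv_const. auto. Qed.

Lemma dot_cv k (v : nat -> vec) w : (forall j, (j < k)%nat -> Un_cv (fun n => v n j) (w j)) ->
  Un_cv (fun n => dot k (v n) (v n)) (dot k w w).
Proof. intros H. unfold dot. apply cv_fsum. intros i Hi. apply CV_mult; auto. Qed.

Lemma qf_scal k S c v : qf k S (fun i => c * v i) = c * c * qf k S v.
Proof. unfold qf, dot. rewrite <- fsum_scal. apply fsum_ext; intros. rewrite mv_scal. ring. Qed.
Lemma dot_scal k c v : dot k (fun i => c * v i) (fun i => c * v i) = c * c * dot k v v.
Proof. unfold dot. rewrite <- fsum_scal. apply fsum_ext; intros. ring. Qed.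

Lemma fsum_ind k i c : (i < k)%nat -> fsum k (fun j => if Nat.eqb j i then c else 0) = c.
Proof. induction k; intros Hi. lia. simpl. destruct (Nat.eqb_spec k i).
  subst. replace (fsum i (fun j => if Nat.eqb j i then c else 0)) with 0. ring.
  symmetry; transitivity (fsum i (fun _ => 0)). apply fsum_ext; intros. destruct (Nat.eqb_spec i0 i); auto; lia. apply fsum_0.
  rewrite IHk by lia. ring. Qed.

Lemma dot_sym_S k S u v : symmetric k S -> dot k u (mv k S v) = dot k v (mv k S u).
Proof. intros HS. unfold dot, mv.
  transitivity (fsum k (fun i => fsum k (fun j => u i * S i j * v j))).
  apply fsum_ext; intros; rewrite <- fsum_scal; apply fsum_ext; intros; ring.
  rewrite fsum_swap. apply fsum_ext; intros. rewrite <- fsum_scal; apply fsum_ext; intros.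
  rewrite (HS i0 i) by auto. ring. Qed.

Lemma dot_expand k w g e : dot k (fun i => w i + e * g i) (fun i => w i + e * g i) = dot k w w + 2 * e * dot k w g + e * e * dot k g g.
Proof. unfold dot. rewrite <- !fsum_scal, <- !fsum_plus. apply fsum_ext; intros; ring. Qed.

Lemma qf_expand k S w g e : qf k S (fun i => w i + e * g i) = qf k S w + e * (dot k w (mv k S g) + dot k g (mv k S w)) + e * e * qf k S g.
Proof. unfold qf, dot. rewrite <- fsum_plus, <- !fsum_scal, <- !fsum_plus.
  apply fsum_ext; intros. replace (mv k S (fun i0 => w i0 + e * g i0) i) with (mv k S w i + e * mv k S g i).
  ring. unfold mv. rewrite <- fsum_scal, <- fsum_plus. apply fsum_ext; intros; ring. Qed.

Lemma dot_zero_vec k v : dot k v v = 0 -> forall i, (i < k)%nat -> v i = 0.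
Proof. intros H. apply vnorm_zero. rewrite vnorm_dot, H. apply sqrt_0. Qed.

Lemma abs_le_c x c : Rabs x <= c -> -c <= x <= c.
Proof. unfold Rabs; destruct (Rcase_abs x); lra. Qed.

Lemma sym_max_bound k Sm mu : symmetric k Sm -> is_max_eig k Sm mu -> forall v, qf k Sm v <= mu * dot k v v.
Proof.
  intros HS [[v0 [[i0 [Hi0 Hv0]] _]] Hmax].
  set (Q := fun s => exists v, dot k v v = 1 /\ s = qf k Sm v).
  set (C := fsum k (fun i => fsum k (fun j => Rabs (Sm i j)))).
  assert (Hcomp : forall v, dot k v v = 1 -> forall j, (j < k)%nat -> -1 <= v j <= 1).
  { intros v Hv j Hj. pose proof (vnorm_comp k v j Hj). rewrite vnorm_dot, Hv, sqrt_1 in H.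
    apply abs_le_c. lra. }
  assert (HQb : bound Q).
  { exists C. intros s [v [Hv Es]]. subst s. unfold qf, dot, mv, C.
    eapply Rle_trans. apply Rle_abs. eapply Rle_trans. apply fsum_abs. apply fsum_le; intros i Hi.
    rewrite Rabs_mult. assert (Rabs (v i) <= 1) by (apply Rabs_le; apply Hcomp; auto).
    assert (Rabs (fsum k (fun j => Sm i j * v j)) <= fsum k (fun j => Rabs (Sm i j))).
    { eapply Rle_trans. apply fsum_abs. apply fsum_le; intros j Hj. rewrite Rabs_mult.
      assert (Rabs (v j) <= 1) by (apply Rabs_le; apply Hcomp; auto).
      pose proof (Rabs_pos (Sm i j)). pose proof (Rabs_pos (v j)). nra. }
    pose proof (Rabs_pos (v i)). pose proof (Rabs_pos (fsum k (fun j => Sm i j * v j))). nra. }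
  assert (HQne : exists s, Q s).
  { exists (qf k Sm (fun j => if Nat.eqb j i0 then 1 else 0)). exists (fun j => if Nat.eqb j i0 then 1 else 0). split; auto.
    unfold dot. transitivity (fsum k (fun j => if Nat.eqb j i0 then 1 else 0)). apply fsum_ext; intros. destruct (Nat.eqb i i0); ring. apply fsum_ind; auto. }
  destruct (completeness Q HQb HQne) as [lam [Hub Hlub]].
  assert (HA : forall v, qf k Sm v <= lam * dot k v v).
  { intros v. destruct (Req_dec (dot k v v) 0) as [E|E].
    - rewrite E. unfold qf, dot. rewrite Rmult_0_r. right. transitivity (fsum k (fun _ => 0)).
      apply fsum_ext; intros. rewrite (dot_zero_vec k v E) by auto. ring. apply fsum_0.
    - pose proof (dot_self_nonneg k v). set (c := / sqrt (dot k v v)).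
      assert (Hsq : 0 < sqrt (dot k v v)) by (apply sqrt_lt_R0; lra).
      assert (Hc : c * c * dot k v v = 1). { unfold c. rewrite <- (sqrt_sqrt (dot k v v)) at 3 by lra. field. lra. }
      assert (qf k Sm (fun i => c * v i) <= lam). { apply Hub. exists (fun i => c * v i). split; auto. rewrite dot_scal; auto. }
      rewrite qf_scal in H0. assert (0 < c * c) by (unfold c; pose proof (Rinv_0_lt_compat _ Hsq); nra).
      apply Rmult_le_reg_l with (c * c); auto. replace (c * c * (lam * dot k v v)) with (lam * (c * c * dot k v v)) by ring. rewrite Hc. lra. }
  assert (Hseq : forall n : nat, {v | dot k v v = 1 /\ lam - / INR (S n) < qf k Sm v}).
  { intros n. apply constructive_indefinite_description. apply NNPP. intros Hn.
    assert (lam <= lam - / INR (S n)).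
    { apply Hlub. intros s [v [Hv Es]]. subst. destruct (Rle_dec (qf k Sm v) (lam - / INR (S n))); auto.
      exfalso; apply Hn; exists v; split; auto; lra. }
    pose proof (Rinv_0_lt_compat (INR (S n)) ltac:(apply lt_0_INR; lia)). lra. }
  set (vs := fun n => proj1_sig (Hseq n)).
  assert (Hvs : forall n, dot k (vs n) (vs n) = 1 /\ lam - / INR (S n) < qf k Sm (vs n)) by (intros; unfold vs; destruct (Hseq n); auto).
  destruct (bwk vs k) as [phi [w [Hphi Hw]]]. intros n j Hj. apply Hcomp; auto. apply Hvs.
  assert (Hw1 : dot k w w = 1).
  { symmetry. apply (UL_sequence (fun n => dot k (vs (phi n)) (vs (phi n)))). 
    intros e He. exists O. intros n Hn. rewrite (proj1 (Hvs (phi n))). unfold R_dist. replace (1 - 1) with 0 by ring. rewrite Rabs_R0; lra.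
    apply dot_cv; auto. }
  assert (Hqw : qf k Sm w = lam).
  { apply Rle_antisym. specialize (HA w). rewrite Hw1 in HA. lra.
    apply Rnot_lt_le. intros Hlt.
    assert (Hcv := qf_cv k Sm (fun n => vs (phi n)) w Hw).
    destruct (Hcv ((lam - qf k Sm w) / 2) ltac:(lra)) as [N1 HN1].
    destruct (archimed (2 / (lam - qf k Sm w))) as [Hup _].
    assert (Hz : (0 <= up (2 / (lam - qf k Sm w)))%Z).
    { apply le_IZR. assert (0 < 2 / (lam - qf k Sm w)) by (apply Rdiv_lt_0_compat; lra). lra. }
    destruct (IZN _ Hz) as [N2 EN]. rewrite EN, <- INR_IZR_INZ in Hup.
    set (n := Nat.max N1 N2). specialize (HN1 n ltac:(unfold n; lia)). unfold R_dist in HN1.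
    apply Rabs_def2 in HN1. destruct (Hvs (phi n)) as [_ Hq].
    assert (Hpn : (n <= phi n)%nat). { clear -Hphi. induction n. lia. specialize (Hphi n). lia. }
    assert (INR N2 < INR (S (phi n))) by (apply lt_INR; unfold n in *; lia).
    assert (/ INR (S (phi n)) < (lam - qf k Sm w) / 2).
    { assert (0 < INR (S (phi n))) by (apply lt_0_INR; lia).
      apply Rmult_lt_reg_l with (INR (S (phi n))); auto. rewrite Rinv_r by lra.
      assert (2 / (lam - qf k Sm w) < INR (S (phi n))) by lra.
      apply Rmult_lt_compat_r with (r := (lam - qf k Sm w) / 2) in H1; [|lra].
      replace (2 / (lam - qf k Sm w) * ((lam - qf k Sm w) / 2)) with 1 in H1 by (field; lra). lra. }
    lra. }
  set (g := fun i => lam * w i - mv k Sm w i).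
  assert (HG : dot k g g = 0).
  { assert (Hpos : forall e, 0 <= 2 * e * dot k g g + e * e * (lam * dot k g g - qf k Sm g)).
    { intros e. specialize (HA (fun i => w i + e * g i)). rewrite dot_expand, qf_expand in HA.
      rewrite (dot_sym_S k Sm w g HS) in HA.
      assert (dot k g g = lam * dot k w g - dot k g (mv k Sm w)).
      { unfold dot, g. rewrite <- fsum_scal, <- fsum_minus. apply fsum_ext; intros; ring. }
      rewrite Hqw, Hw1 in HA.
      replace (2 * e * dot k g g + e * e * (lam * dot k g g - qf k Sm g)) with
        (lam * (1 + 2 * e * dot k w g + e * e * dot k g g) - (lam + e * (dot k g (mv k Sm w) + dot k g (mv k Sm w)) + e * e * qf k Sm g)).
      lra. rewrite H at 2. ring. }
    pose proof (dot_self_nonneg k g) as HG0. pose proof (HA g) as HAg.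
    set (c := lam * dot k g g - qf k Sm g) in *. assert (0 <= c) by (unfold c; lra).
    set (G := dot k g g) in *. specialize (Hpos (- G / (c + 1))).
    assert (2 * (- G / (c + 1)) * G + - G / (c + 1) * (- G / (c + 1)) * c = - G * G * (c + 2) / ((c + 1) * (c + 1))) by (field; lra).
    rewrite H0 in Hpos. assert (0 < (c + 1) * (c + 1)) by nra.
    assert (0 <= - G * G * (c + 2)).
    { apply Rmult_le_reg_r with (/ ((c+1)*(c+1))). apply Rinv_0_lt_compat; auto. rewrite Rmult_0_l. auto. }
    nra. }
  assert (Heig : real_eigen k Sm lam).
  { exists w. split.
    - apply NNPP. intros Hn. assert (dot k w w = 0).
      { unfold dot. transitivity (fsum k (fun _ => 0)). apply fsum_ext; intros.
        destruct (Req_dec (w i) 0) as [E|E]. rewrite E; ring. exfalso; apply Hn; exists i; auto. apply fsum_0. }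
      lra.
    - intros i Hi. pose proof (dot_zero_vec k g HG i Hi). unfold g in H. lra. }
  apply Hmax in Heig. intros v. specialize (HA v). pose proof (dot_self_nonneg k v). nra.
Qed.

Lemma log_norm_quad k A mu : is_log_norm k A mu -> forall v, dot k v (mv k A v) <= mu * dot k v v.
Proof.
  intros H v. set (Sm := mscal (/2) (madd A (mtr A))).
  assert (HS : symmetric k Sm) by (intros i j _ _; unfold Sm, mscal, madd, mtr; ring).
  pose proof (sym_max_bound k Sm mu HS H v).
  replace (dot k v (mv k A v)) with (qf k Sm v); auto.
  unfold qf, Sm. 
  assert (E : dot k v (mv k (mtr A) v) = dot k v (mv k A v)).
  { unfold dot, mv, mtr. transitivity (fsum k (fun i => fsum k (fun j => v i * A j i * v j))).
    apply fsum_ext; intros; rewrite <- fsum_scal; apply fsum_ext; intros; ring.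
    rewrite fsum_swap. apply fsum_ext; intros; rewrite <- fsum_scal; apply fsum_ext; intros; ring. }
  transitivity (/2 * (dot k v (mv k A v) + dot k v (mv k (mtr A) v))).
  unfold dot. rewrite <- fsum_plus, <- fsum_scal. apply fsum_ext; intros.
  unfold mv, mscal, madd.
  replace (fsum k (fun j => / 2 * (A i j + mtr A i j) * v j)) with (/2 * (fsum k (fun j => A i j * v j) + fsum k (fun j => mtr A i j * v j))). ring.
  rewrite <- fsum_plus, <- fsum_scal. apply fsum_ext; intros; ring.
  rewrite E. field.
Qed.

Lemma dpl_plus f g x a b : derivable_pt_lim f x a -> derivable_pt_lim g x b -> derivable_pt_lim (fun t => f t + g t) x (a + b).
Proof. apply derivable_pt_lim_plus. Qed.
Lemma dpl_minus f g x a b : derivable_pt_lim f x a -> derivable_pt_lim g x b -> derivable_pt_lim (fun t => f t - g t) x (a - b).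
Proof. apply derivable_pt_lim_minus. Qed.
Lemma dpl_mult f g x a b : derivable_pt_lim f x a -> derivable_pt_lim g x b -> derivable_pt_lim (fun t => f t * g t) x (a * g x + f x * b).
Proof. intros. apply derivable_pt_lim_mult; auto. Qed.
Lemma dpl_const c x : derivable_pt_lim (fun _ => c) x 0.
Proof. apply derivable_pt_lim_const. Qed.
Lemma dpl_id x : derivable_pt_lim (fun t => t) x 1.
Proof. apply derivable_pt_lim_id. Qed.
Lemma dpl_scal c f x a : derivable_pt_lim f x a -> derivable_pt_lim (fun t => c * f t) x (c * a).
Proof. intros. replace (c * a) with (0 * f x + c * a) by ring. apply dpl_mult; auto. apply dpl_const. Qed.
Lemma dpl_comp f g x a b : derivable_pt_lim f x a -> derivable_pt_lim g (f x) b -> derivable_pt_lim (fun t => g (f t)) x (b * a).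
Proof. intros. apply (derivable_pt_lim_comp f g); auto. Qed.
Lemma dpl_exp_lin c a x : derivable_pt_lim (fun t => exp (c * (t - a))) x (c * exp (c * (x - a))).
Proof. replace (c * exp (c * (x - a))) with (exp (c * (x - a)) * (c * (1 - 0))) by ring.
  apply dpl_comp with (f := fun t => c * (t - a)). apply dpl_scal, dpl_minus. apply dpl_id. apply dpl_const.
  apply derivable_pt_lim_exp. Qed.
Lemma dpl_ext f g x a : (forall t, f t = g t) -> derivable_pt_lim f x a -> derivable_pt_lim g x a.
Proof. intros E. replace g with f; auto. apply functional_extensionality; auto. Qed.

Lemma dpl_fsum n (h : nat -> R -> R) (h' : nat -> R) x :
  (forall i, (i < n)%nat -> derivable_pt_lim (h i) x (h' i)) ->
  derivable_pt_lim (fun t => fsum n (fun i => h i t)) x (fsum n h').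
Proof. induction n; intros H; simpl. apply dpl_const. apply dpl_plus. apply IHn; intros; apply H; lia. apply H; lia. Qed.

Lemma ac_deriv f f' a b L : 0 <= L -> (forall t, a <= t <= b -> derivable_pt_lim f t (f' t)) ->
  (forall t, a <= t <= b -> Rabs (f' t) <= L) -> abs_cont_on f a b.
Proof.
  intros HL Hd Hb. apply ac_lip with L; auto. intros l r H1 H2 H3.
  destruct (MVT_abs f f' l r) as [c [Hc1 Hc2]].
  intros c Hc. rewrite Rmin_left, Rmax_right in Hc by lra. apply Hd; lra.
  rewrite Rmin_left, Rmax_right in Hc2 by lra. rewrite Hc1, (Rabs_right (r - l)) by lra.
  apply Rmult_le_compat_r. lra. apply Hb; lra.
Qed.

Lemma sqrt_lip eta x y : eta > 0 -> 0 <= x -> 0 <= y ->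
  Rabs (sqrt (x + eta) - sqrt (y + eta)) <= / (2 * sqrt eta) * Rabs (x - y).
Proof.
  intros He Hx Hy. assert (Hs : 0 < sqrt eta) by (apply sqrt_lt_R0; lra).
  assert (sqrt eta <= sqrt (x + eta)) by (apply sqrt_le_1_alt; lra).
  assert (sqrt eta <= sqrt (y + eta)) by (apply sqrt_le_1_alt; lra).
  assert (E : sqrt (x + eta) - sqrt (y + eta) = (x - y) / (sqrt (x + eta) + sqrt (y + eta))).
  { field_simplify_eq. 2: lra. rewrite <- !Rsqr_pow2, !Rsqr_sqrt by lra. ring. }
  rewrite E. unfold Rdiv. rewrite Rabs_mult, Rmult_comm. apply Rmult_le_compat_r. apply Rabs_pos.
  rewrite Rabs_right. apply Rinv_le_contravar; lra. apply Rle_ge, Rlt_le, Rinv_0_lt_compat; lra.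
Qed.

Definition fm (mu r : R) : R := if Rle_dec mu 0 then r else (exp (mu * r) - 1) / mu.

Lemma exp_nonpos_le1 z : z <= 0 -> exp z <= 1.
Proof. intros H. rewrite <- exp_0. destruct (Req_dec z 0). subst; lra. left; apply exp_increasing; lra. Qed.

Lemma sqrt_plus_le x y : 0 <= x -> 0 <= y -> sqrt (x + y) <= sqrt x + sqrt y.
Proof. intros Hx Hy. pose proof (sqrt_pos x); pose proof (sqrt_pos y).
  rewrite <- (sqrt_square (sqrt x + sqrt y)) by lra. apply sqrt_le_1_alt.
  assert (sqrt x * sqrt x = x) by (apply sqrt_sqrt; auto). assert (sqrt y * sqrt y = y) by (apply sqrt_sqrt; auto). nra. Qed.

Section Comp.
Variables (nx : nat) (A : mat) (mu : R) (bk : vec) (x y d g : R -> vec) (a s : R) (N : R -> Prop) (G D : R).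
Hypotheses (Hmu : 0 <= mu) (Has : a <= s) (HG : 0 <= G) (HD : 0 <= D)
  (HA : forall v, dot nx v (mv nx A v) <= mu * dot nx v v)
  (Hxac : forall i, (i < nx)%nat -> abs_cont_on (fun t => x t i) a s)
  (Hyac : forall i, (i < nx)%nat -> abs_cont_on (fun t => y t i) a s)
  (HN : null_set N)
  (Hxd : forall t, a <= t < s -> ~ N t -> forall i, (i < nx)%nat ->
          derivable_pt_lim (fun r => x r i) t (mv nx A (x t) i + bk i + d t i))
  (Hyd : forall t, a <= t < s -> forall i, (i < nx)%nat ->
          derivable_pt_lim (fun r => y r i) t (mv nx A (y t) i + bk i + g t i))
  (Hdb : forall t, a <= t < s -> vnorm nx (d t) <= D)
  (Hgb : forall t, a <= t < s -> vnorm nx (g t) <= G).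

Let e t := vsub (y t) (x t).
Let V t := dot nx (e t) (e t).
Let ep t := fun i => mv nx A (e t) i + g t i - d t i.
Let Psi t := if Rle_dec mu 0 then t - a else (1 - exp (- mu * (t - a))) / mu.

Lemma V_nonneg t : 0 <= V t.
Proof. apply dot_self_nonneg. Qed.

Lemma e_deriv t : a <= t < s -> ~ N t -> forall i, (i < nx)%nat -> derivable_pt_lim (fun r => e r i) t (ep t i).
Proof. intros Ht HNt i Hi. apply dpl_ext with (fun r => y r i - x r i). intros; unfold e, vsub; auto.
  replace (ep t i) with ((mv nx A (y t) i + bk i + g t i) - (mv nx A (x t) i + bk i + d t i)).
  apply dpl_minus; [apply Hyd|apply Hxd]; auto.
  unfold ep, e. rewrite mv_vsub. ring. Qed.

Lemma V_deriv t : a <= t < s -> ~ N t -> derivable_pt_lim V t (2 * dot nx (e t) (ep t)).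
Proof. intros Ht HNt. unfold V, dot.
  apply dpl_ext with (fun r => fsum nx (fun i => e r i * e r i)). intros; auto.
  replace (2 * fsum nx (fun i => e t i * ep t i)) with (fsum nx (fun i => ep t i * e t i + e t i * ep t i)).
  apply dpl_fsum. intros i Hi. apply dpl_mult; apply e_deriv; auto.
  rewrite <- fsum_scal. apply fsum_ext; intros; ring. Qed.

Lemma Psi_deriv t : derivable_pt_lim Psi t (exp (- mu * (t - a))).
Proof. unfold Psi. destruct (Rle_dec mu 0).
  - assert (mu = 0) by lra. subst. replace (- 0 * (t - a)) with 0 by ring. rewrite exp_0.
    replace 1 with (1 - 0) by ring. apply dpl_minus. apply dpl_id. apply dpl_const.
  - apply dpl_ext with (fun r => / mu * (1 - exp (- mu * (r - a)))). intros; unfold Rdiv; ring.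
    replace (exp (- mu * (t - a))) with (/ mu * (0 - - mu * exp (- mu * (t - a)))) by (field; lra).
    apply dpl_scal, dpl_minus. apply dpl_const. apply dpl_exp_lin.
Qed.

Lemma ac_e i : (i < nx)%nat -> abs_cont_on (fun t => e t i) a s.
Proof. intros Hi. apply ac_minus; auto. Qed.

Lemma ac_V : abs_cont_on V a s.
Proof. unfold V, dot. apply ac_fsum. intros i Hi. apply ac_mult; auto; apply ac_e; auto. Qed.

Lemma ac_Psi : abs_cont_on Psi a s.
Proof. apply ac_deriv with (fun t => exp (- mu * (t - a))) 1. lra. intros; apply Psi_deriv.
  intros t Ht. rewrite Rabs_right. apply exp_nonpos_le1. nra. apply Rle_ge, Rlt_le, exp_pos. Qed.

Lemma ac_expf : abs_cont_on (fun t => exp (- mu * (t - a))) a s.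
Proof. apply ac_deriv with (fun t => - mu * exp (- mu * (t - a))) mu. lra. intros; apply dpl_exp_lin.
  intros t Ht. rewrite Rabs_mult, Rabs_Ropp, (Rabs_right mu) by lra. rewrite Rabs_right by (apply Rle_ge, Rlt_le, exp_pos).
  assert (exp (- mu * (t - a)) <= 1) by (apply exp_nonpos_le1; nra). nra. Qed.

Lemma comp_eta eta : eta > 0 ->
  vnorm nx (e s) <= exp (mu * (s - a)) * (vnorm nx (e a) + sqrt eta) + (G + D) * fm mu (s - a).
Proof.
  intros Heta. set (C := G + D).
  set (ge := fun t => sqrt (V t + eta)).
  set (F := fun t => exp (- mu * (t - a)) * ge t - C * Psi t).
  assert (Hge_pos : forall t, 0 < ge t) by (intros; apply sqrt_lt_R0; pose proof (V_nonneg t); lra).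
  assert (HF : F s <= F a).
  { apply ac_nonincr with N; auto.
    - unfold F. apply ac_minus. apply ac_mult; auto. apply ac_expf.
      unfold ge. apply ac_comp_lip with (phi := fun z => sqrt (z + eta)) (f := V) (L := / (2 * sqrt eta)). apply Rlt_le, Rinv_0_lt_compat.
      pose proof (sqrt_lt_R0 eta Heta); lra. apply ac_V. intros; apply V_nonneg.
      intros; apply sqrt_lip; auto. apply ac_scal, ac_Psi.
    - intros t Ht HNt.
      set (Et := exp (- mu * (t - a))).
      set (gp := / (2 * sqrt (V t + eta)) * (2 * dot nx (e t) (ep t) + 0)).
      exists (- mu * Et * ge t + Et * gp - C * Et). split.
      + unfold F. replace (- mu * Et * ge t + Et * gp - C * Et) with ((- mu * Et * ge t + Et * gp) - C * Et) by ring.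
        apply dpl_minus. apply dpl_mult. apply dpl_exp_lin.
        unfold ge. apply dpl_comp with (f := fun r => V r + eta). apply dpl_plus. apply V_deriv; auto. apply dpl_const.
        apply derivable_pt_lim_sqrt. pose proof (V_nonneg t); lra.
        apply dpl_scal, Psi_deriv.
      + assert (HEt : 0 < Et) by apply exp_pos.
        assert (Hnorm : vnorm nx (e t) <= ge t).
        { rewrite vnorm_dot. apply sqrt_le_1_alt. fold (V t). lra. }
        assert (Hgsq : ge t * ge t = V t + eta) by (apply sqrt_sqrt; pose proof (V_nonneg t); lra).
        assert (Hdot : dot nx (e t) (ep t) <= mu * V t + vnorm nx (e t) * C).
        { assert (dot nx (e t) (ep t) = dot nx (e t) (mv nx A (e t)) + dot nx (e t) (g t) + dot nx (e t) (fun i => - d t i)).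
          { unfold dot, ep. rewrite <- !fsum_plus. apply fsum_ext; intros; ring. }
          rewrite H. pose proof (HA (e t)). pose proof (cauchy_schwarz nx (e t) (g t)).
          pose proof (cauchy_schwarz nx (e t) (fun i => - d t i)). rewrite vnorm_opp in H2.
          pose proof (Hdb t Ht). pose proof (Hgb t Ht). pose proof (vnorm_nonneg nx (e t)).
          unfold C. fold (V t) in H0. nra. }
        assert (Hgp : gp * ge t = dot nx (e t) (ep t)).
        { unfold gp, ge. field. pose proof (Hge_pos t). unfold ge in H. lra. }
        assert (gp <= mu * ge t + C).
        { apply Rmult_le_reg_r with (ge t). auto. rewrite Hgp.
          pose proof (vnorm_nonneg nx (e t)). assert (0 <= C) by (unfold C; lra).
          assert (V t <= ge t * ge t) by lra. nra. }
        assert (Et * (gp - mu * ge t - C) <= 0).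
        { assert (gp - mu * ge t - C <= 0) by lra. nra. }
        lra. }
  unfold F in HF. replace (a - a) with 0 in HF by ring. rewrite Rmult_0_r, exp_0, Rmult_1_l in HF.
  assert (HPa : Psi a = 0). { unfold Psi. destruct (Rle_dec mu 0). ring. replace (- mu * (a - a)) with 0 by ring. rewrite exp_0. field; lra. }
  rewrite HPa, Rmult_0_r, Rminus_0_r in HF.
  assert (Hmul : exp (mu * (s - a)) * exp (- mu * (s - a)) = 1).
  { rewrite <- exp_plus. replace (mu * (s - a) + - mu * (s - a)) with 0 by ring. apply exp_0. }
  assert (HP : exp (mu * (s - a)) * Psi s = fm mu (s - a)).
  { unfold Psi, fm. destruct (Rle_dec mu 0). assert (mu = 0) by lra. rewrite H, Rmult_0_l, exp_0. ring.
    assert (exp (mu * (s - a)) * (1 - exp (- mu * (s - a))) = exp (mu * (s - a)) - 1)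
      by (rewrite Rmult_minus_distr_l, Rmult_1_r, Hmul; ring).
    unfold Rdiv. rewrite <- Rmult_assoc, H. ring. }
  assert (HEs : 0 < exp (mu * (s - a))) by apply exp_pos.
  assert (ge s <= exp (mu * (s - a)) * ge a + C * fm mu (s - a)).
  { apply Rmult_le_compat_l with (r := exp (mu * (s - a))) in HF; [|lra].
    rewrite <- HP. replace (exp (mu * (s - a)) * (exp (- mu * (s - a)) * ge s - C * Psi s)) with
      ((exp (mu * (s - a)) * exp (- mu * (s - a))) * ge s - C * (exp (mu * (s - a)) * Psi s)) in HF by ring.
    rewrite Hmul in HF. lra. }
  assert (vnorm nx (e s) <= ge s). { rewrite vnorm_dot. apply sqrt_le_1_alt. fold (V s). lra. }
  assert (ge a <= vnorm nx (e a) + sqrt eta). { unfold ge. rewrite vnorm_dot. apply sqrt_plus_le. apply V_nonneg. lra. }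
  assert (exp (mu * (s - a)) * ge a <= exp (mu * (s - a)) * (vnorm nx (e a) + sqrt eta)) by (apply Rmult_le_compat_l; lra).
  unfold C in *. lra.
Qed.

Lemma comparison :
  vnorm nx (vsub (y s) (x s)) <= exp (mu * (s - a)) * vnorm nx (vsub (y a) (x a)) + (G + D) * fm mu (s - a).
Proof.
  fold (e s) (e a). set (X := vnorm nx (e s)). set (Y := exp (mu * (s - a)) * vnorm nx (e a) + (G + D) * fm mu (s - a)).
  destruct (Rle_dec X Y) as [|Hn]; auto. exfalso.
  assert (HE : 0 < exp (mu * (s - a))) by apply exp_pos.
  set (q := (X - Y) / (2 * exp (mu * (s - a)))). assert (Hq : 0 < q) by (unfold q; apply Rdiv_lt_0_compat; lra).
  pose proof (comp_eta (q * q) ltac:(nra)). rewrite sqrt_square in H by lra.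
  assert (exp (mu * (s - a)) * q = (X - Y) / 2) by (unfold q; field; lra). unfold X, Y in *. nra.
Qed.

End Comp.

From Coquelicot Require Import Coquelicot.

Lemma mm_assoc k X Y Z i j : mm k (mm k X Y) Z i j = mm k X (mm k Y Z) i j.
Proof. unfold mm. transitivity (fsum k (fun l => fsum k (fun m => X i m * Y m l * Z l j))).
  apply fsum_ext; intros. rewrite Rmult_comm, <- fsum_scal. apply fsum_ext; intros; ring.
  rewrite fsum_swap. apply fsum_ext; intros. rewrite <- fsum_scal. apply fsum_ext; intros; ring. Qed.

Lemma fsum_delta k i (f : nat -> R) : (i < k)%nat -> fsum k (fun j => (if Nat.eqb i j then 1 else 0) * f j) = f i.
Proof. induction k; intros Hi. lia. simpl. destruct (Nat.eqb_spec i k).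
  subst. replace (fsum k (fun j => (if Nat.eqb k j then 1 else 0) * f j)) with 0. ring.
  symmetry. transitivity (fsum k (fun _ => 0)). apply fsum_ext; intros. destruct (Nat.eqb_spec k i); [lia|ring]. apply fsum_0.
  rewrite IHk by lia. ring. Qed.
Lemma fsum_delta' k j (f : nat -> R) : (j < k)%nat -> fsum k (fun l => f l * (if Nat.eqb l j then 1 else 0)) = f j.
Proof. intros. rewrite <- (fsum_delta k j f) by auto. apply fsum_ext; intros. destruct (Nat.eqb_spec i j), (Nat.eqb_spec j i); try lia; ring. Qed.

Lemma mm_idm_l k X i j : (i < k)%nat -> mm k idm X i j = X i j.
Proof. intros. unfold mm, idm. apply (fsum_delta k i (fun l => X l j)); auto. Qed.
Lemma mm_idm_r k X i j : (j < k)%nat -> mm k X idm i j = X i j.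
Proof. intros. unfold mm, idm. apply (fsum_delta' k j (fun l => X i l)); auto. Qed.

Lemma mpow_comm k A n i j : (i < k)%nat -> (j < k)%nat -> mm k (mpow k A n) A i j = mm k A (mpow k A n) i j.
Proof. revert i j. induction n; intros i j Hi Hj; simpl.
  - rewrite mm_idm_l, mm_idm_r; auto.
  - transitivity (mm k (mm k A (mpow k A n)) A i j).
    unfold mm at 1 3. apply fsum_ext; intros. fold (mm k (mpow k A n) A). rewrite IHn; auto.
    apply mm_assoc. Qed.

Section Pow.
Variables (k : nat) (A : mat).
Definition pw n (v : vec) : vec := mv k (mpow k A n) v.

Lemma pw_0 v i : (i < k)%nat -> pw 0 v i = v i.
Proof. intros. unfold pw, mv; simpl. unfold idm. apply (fsum_delta k i v); auto. Qed.
Lemma pw_S n v i : (i < k)%nat -> pw (S n) v i = mv k A (pw n v) i.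
Proof. intros Hi. unfold pw. simpl. rewrite <- mv_mm. unfold mv. apply fsum_ext; intros. rewrite mpow_comm; auto. Qed.

Definition Mb := fsum k (fun l => fsum k (fun j => Rabs (A l j))) + 1.
Lemma Mb_pos : 1 <= Mb.
Proof. unfold Mb. assert (0 <= fsum k (fun l => fsum k (fun j => Rabs (A l j)))). apply fsum_nonneg; intros; apply fsum_nonneg; intros; apply Rabs_pos. lra. Qed.

Lemma mpow_bound n i j : (i < k)%nat -> (j < k)%nat -> Rabs (mpow k A n i j) <= Mb ^ n.
Proof. revert i j. induction n; intros i j Hi Hj; simpl.
  - unfold idm. destruct (Nat.eqb i j); [rewrite Rabs_R1|rewrite Rabs_R0]; lra.
  - unfold mm. eapply Rle_trans. apply fsum_abs.
    apply Rle_trans with (fsum k (fun l => Mb ^ n * Rabs (A l j))).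
    apply fsum_le; intros. rewrite Rabs_mult. apply Rmult_le_compat_r. apply Rabs_pos. auto.
    rewrite fsum_scal. rewrite (Rmult_comm Mb). apply Rmult_le_compat_l. apply pow_le. pose proof Mb_pos; lra.
    unfold Mb. apply Rle_trans with (fsum k (fun l => fsum k (fun j0 => Rabs (A l j0)))). 2: lra.
    apply fsum_le; intros l Hl. apply (fsum_le_term k (fun j0 => Rabs (A l j0))); auto. intros; apply Rabs_pos.
Qed.

Lemma pw_bound n v i : (i < k)%nat -> Rabs (pw n v i) <= Mb ^ n * fsum k (fun j => Rabs (v j)).
Proof. intros Hi. unfold pw, mv. eapply Rle_trans. apply fsum_abs. rewrite <- fsum_scal. apply fsum_le; intros.
  rewrite Rabs_mult. apply Rmult_le_compat_r. apply Rabs_pos. apply mpow_bound; auto. Qed.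
End Pow.

Lemma is_series_zero : is_series (fun _ : nat => 0) 0.
Proof. apply is_series_Reals. intros e He. exists O. intros n _. rewrite sum_cte. unfold R_dist.
  replace (0 * INR (S n) - 0) with 0 by ring. rewrite Rabs_R0; lra. Qed.

Lemma is_series_add a b la lb : is_series a la -> is_series b lb -> is_series (fun n => a n + b n) (la + lb).
Proof. intros. apply (is_series_plus a b la lb); auto. Qed.
Lemma is_series_mul c a l : is_series a l -> is_series (fun n => c * a n) (c * l).
Proof. intros. apply (is_series_scal c a l); auto. Qed.

Lemma is_series_fsum n (a : nat -> nat -> R) (l : nat -> R) :
  (forall j, (j < n)%nat -> is_series (a j) (l j)) -> is_series (fun p => fsum n (fun j => a j p)) (fsum n l).
Proof. induction n; intros H; simpl. apply is_series_zero. apply is_series_add. apply IHn; intros; apply H; lia. apply H; lia. Qed.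

Lemma term_le_exp y n : 0 <= y -> y ^ n / INR (fact n) <= exp y.
Proof. intros Hy. eapply Rle_trans. 2: apply (exp_ge_taylor y n Hy).
  destruct n. simpl. lra. simpl. assert (0 <= sum_f_R0 (fun k => y ^ k / INR (fact k)) n).
  apply cond_pos_sum. intros. apply Rmult_le_pos. apply pow_le; auto. apply Rlt_le, Rinv_0_lt_compat, INR_fact_lt_0. lra. Qed.

Lemma radius_inf (a : nat -> R) C M : 0 <= C -> 0 <= M -> (forall p, Rabs (a p) <= C * M ^ p / INR (fact p)) ->
  forall x, Rbar_lt (Rabs x) (CV_radius a).
Proof.
  intros HC HM Ha x. set (r := Rabs x + 1).
  assert (Hr : Rbar_le r (CV_radius a)).
  { destruct (CV_radius_bounded a) as [Hub _]. apply Hub. exists (C * exp (M * r)). intros n.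
    rewrite Rabs_mult, <- RPow_abs. unfold r. rewrite (Rabs_right (Rabs x + 1)) by (pose proof (Rabs_pos x); lra).
    eapply Rle_trans. apply Rmult_le_compat_r. apply pow_le; pose proof (Rabs_pos x); lra. apply Ha.
    replace (C * M ^ n / INR (fact n) * (Rabs x + 1) ^ n) with (C * ((M * (Rabs x + 1)) ^ n / INR (fact n))).
    apply Rmult_le_compat_l; auto. apply term_le_exp. pose proof (Rabs_pos x); nra.
    rewrite Rpow_mult_distr. field. apply INR_fact_neq_0. }
  destruct (CV_radius a) as [l| |]; simpl in *; auto. unfold r in Hr; lra.
Qed.

Lemma expm_pseries k A t E i j : is_expm k A t E -> (i < k)%nat -> (j < k)%nat ->
  is_series (fun p => mpow k A p i j / INR (fact p) * t ^ p) (E i j).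
Proof. intros H Hi Hj. specialize (H i j Hi Hj). apply is_series_Reals in H.
  eapply is_series_ext; [|apply H]. intros n. simpl. field. apply INR_fact_neq_0. Qed.

Lemma is_series_single (v : R) : is_series (fun n => if Nat.eqb n 0 then v else 0) v.
Proof. apply is_series_Reals. intros e He. exists O. intros n _. unfold R_dist.
assert (Hs: forall m, sum_f_R0 (fun n => if Nat.eqb n 0 then v else 0) m = v) by (induction m; simpl; auto; rewrite IHm; ring).
rewrite Hs. replace (v - v) with 0 by ring. rewrite Rabs_R0; lra. Qed.

Lemma pseries_is (a : nat -> R) x : (forall y, Rbar_lt (Rabs y) (CV_radius a)) -> is_series (fun n => a n * x ^ n) (PSeries a x).
Proof. intros H. apply Series_correct. apply ex_pseries_R. apply CV_radius_inside. apply H. Qed.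

Lemma dpl_pseries_shift (a : nat -> R) (a0 t : R) : (forall y, Rbar_lt (Rabs y) (CV_radius a)) ->
  derivable_pt_lim (fun r => PSeries a (r - a0)) t (PSeries (PS_derive a) (t - a0)).
Proof. intros H. replace (PSeries (PS_derive a) (t - a0)) with (PSeries (PS_derive a) (t - a0) * (1 - 0)) by ring.
  apply (derivable_pt_lim_comp (fun r => r - a0) (PSeries a)).
  apply derivable_pt_lim_minus. apply derivable_pt_lim_id. apply derivable_pt_lim_const.
  apply is_derive_Reals. apply is_derive_PSeries. apply H. Qed.

Lemma radius_derive_inf (a : nat -> R) : (forall y, Rbar_lt (Rabs y) (CV_radius a)) -> forall y, Rbar_lt (Rabs y) (CV_radius (PS_derive a)).
Proof. intros H y. rewrite CV_radius_derive. auto. Qed.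

Lemma INR_fact_S n : INR (S n) / INR (fact (S n)) = / INR (fact n).
Proof. rewrite fact_simpl, mult_INR. field. split. apply INR_fact_neq_0. apply not_0_INR; lia. Qed.

Lemma fsum_mulr k f c : fsum k f * c = fsum k (fun j => f j * c).
Proof. rewrite Rmult_comm, <- fsum_scal. apply fsum_ext; intros; ring. Qed.

Section Nominal.
Variables (nx nu : nat) (A B : mat) (c kc : vec).
Let bkc := mv nu B kc.
Definition cy i p := pw nx A p c i / INR (fact p) + match p with O => 0 | S q => pw nx A q bkc i / INR (fact p) end.
Definition ynom (a r : R) : vec := fun i => PSeries (cy i) (r - a).

Lemma cy_radius i : (i < nx)%nat -> forall y, Rbar_lt (Rabs y) (CV_radius (cy i)).
Proof.
  intros Hi. set (C := fsum nx (fun j => Rabs (c j)) + fsum nx (fun j => Rabs (bkc j))).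
  assert (HC1 : 0 <= fsum nx (fun j => Rabs (c j))) by (apply fsum_nonneg; intros; apply Rabs_pos).
  assert (HC2 : 0 <= fsum nx (fun j => Rabs (bkc j))) by (apply fsum_nonneg; intros; apply Rabs_pos).
  pose proof (Mb_pos nx A) as HM.
  apply radius_inf with C (Mb nx A). unfold C; lra. lra.
  intros p. unfold cy. assert (Hf : 0 < INR (fact p)) by apply INR_fact_lt_0.
  destruct p as [|q].
  - rewrite Rplus_0_r. unfold Rdiv. rewrite Rabs_mult, (Rabs_right (/ _)) by (apply Rle_ge, Rlt_le, Rinv_0_lt_compat; auto).
    apply Rmult_le_compat_r. apply Rlt_le, Rinv_0_lt_compat; auto. eapply Rle_trans. apply pw_bound; auto. unfold C; simpl; lra.
  - unfold Rdiv. rewrite <- Rmult_plus_distr_r. rewrite Rabs_mult, (Rabs_right (/ _)) by (apply Rle_ge, Rlt_le, Rinv_0_lt_compat; auto).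
    apply Rmult_le_compat_r. apply Rlt_le, Rinv_0_lt_compat; auto.
    eapply Rle_trans. apply Rabs_triang. pose proof (pw_bound nx A (S q) c i Hi). pose proof (pw_bound nx A q bkc i Hi).
    assert (Mb nx A ^ q <= Mb nx A ^ S q). { simpl. assert (0 < Mb nx A ^ q) by (apply pow_lt; lra). nra. }
    unfold C. assert (Mb nx A ^ q * fsum nx (fun j => Rabs (bkc j)) <= Mb nx A ^ S q * fsum nx (fun j => Rabs (bkc j))) by
      (apply Rmult_le_compat_r; auto). nra.
Qed.

Lemma ynom_at_a a i : (i < nx)%nat -> ynom a a i = c i.
Proof. intros Hi. unfold ynom. replace (a - a) with 0 by ring. rewrite PSeries_0. unfold cy. rewrite pw_0 by auto. simpl. field. Qed.

Lemma ynom_deriv a t i : (i < nx)%nat ->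
  derivable_pt_lim (fun r => ynom a r i) t (mv nx A (ynom a t) i + bkc i + 0).
Proof.
  intros Hi. unfold ynom. rewrite Rplus_0_r.
  replace (mv nx A (fun j => PSeries (cy j) (t - a)) i + bkc i) with (PSeries (PS_derive (cy i)) (t - a)).
  apply dpl_pseries_shift. apply cy_radius; auto.
  set (tau := t - a).
  assert (H1 := pseries_is (PS_derive (cy i)) tau (radius_derive_inf _ (cy_radius i Hi))).
  apply is_series_unique. 
  assert (H2 : is_series (fun n => fsum nx (fun j => A i j * (cy j n * tau ^ n)) + (if Nat.eqb n 0 then bkc i else 0))
     (mv nx A (fun j => PSeries (cy j) tau) i + bkc i)).
  { apply is_series_add. apply is_series_fsum. intros j Hj. apply is_series_mul. apply pseries_is. apply cy_radius; auto.
    apply is_series_single. }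
  eapply is_series_ext; [|apply H2]. intros n. simpl.
  unfold PS_derive, cy.
  transitivity (mv nx A (pw nx A n c) i / INR (fact n) * tau ^ n + (match n with O => bkc i | S q => mv nx A (pw nx A q bkc) i / INR (fact n) * tau ^ n end)).
  - replace (fsum nx (fun j => A i j * ((pw nx A n c j / INR (fact n) + match n with 0%nat => 0 | S q => pw nx A q bkc j / INR (fact n) end) * tau ^ n)))
      with (mv nx A (pw nx A n c) i / INR (fact n) * tau ^ n + match n with O => 0 | S q => mv nx A (pw nx A q bkc) i / INR (fact n) * tau ^ n end).
    destruct n; simpl; ring.
    unfold mv. destruct n.
    + rewrite Rplus_0_r. unfold Rdiv. rewrite !fsum_mulr. apply fsum_ext; intros; ring.
    + unfold Rdiv. rewrite !fsum_mulr, <- fsum_plus. apply fsum_ext; intros; ring.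
  - rewrite <- !pw_S by auto. destruct n.
    + simpl. rewrite pw_0 by auto. field.
    + rewrite <- (pw_S nx A n bkc i) by auto. unfold Rdiv. rewrite <- (INR_fact_S (S n)). field. apply INR_fact_neq_0.
Qed.
End Nominal.

Lemma ynom_ac nx nu A B c kc a lo hi i : (i < nx)%nat -> lo <= hi ->
  abs_cont_on (fun r => ynom nx nu A B c kc a r i) lo hi.
Proof.
  intros Hi Hlh. set (f' := fun r => PSeries (PS_derive (cy nx nu A B c kc i)) (r - a)).
  assert (Hc : forall r, continuity_pt (fun r => Rabs (f' r)) r).
  { intros r. apply (continuity_pt_comp f' Rabs). unfold f'.
    apply (continuity_pt_comp (fun r => r - a) (PSeries (PS_derive (cy nx nu A B c kc i)))).
    apply continuity_pt_minus. apply continuity_pt_id. apply continuity_pt_const. intros u v; auto.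
    apply PSeries_continuity. apply radius_derive_inf. apply cy_radius; auto. apply Rcontinuity_abs. }
  destruct (continuity_ab_maj (fun r => Rabs (f' r)) lo hi Hlh (fun r _ => Hc r)) as [Mx [HMx _]].
  apply ac_deriv with f' (Rabs (f' Mx)). apply Rabs_pos.
  intros t _. unfold ynom, f'. apply dpl_pseries_shift. apply cy_radius; auto.
  intros t Ht. apply HMx; auto.
Qed.

Definition hc nx A B i j p := match p with O => 0 | S q => mm nx (mpow nx A q) B i j / INR (fact p) end.

Lemma hc_radius nx A B i j : (i < nx)%nat -> forall y, Rbar_lt (Rabs y) (CV_radius (hc nx A B i j)).
Proof.
  intros Hi. set (Cb := fsum nx (fun l => Rabs (B l j))).
  assert (HCb : 0 <= Cb) by (apply fsum_nonneg; intros; apply Rabs_pos). pose proof (Mb_pos nx A).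
  apply radius_inf with Cb (Mb nx A); auto. lra.
  intros [|q]; cbv beta iota delta [hc]. rewrite Rabs_R0. apply Rmult_le_pos. apply Rmult_le_pos; auto. lra.
  apply Rlt_le, Rinv_0_lt_compat, INR_fact_lt_0.
  unfold Rdiv. rewrite Rabs_mult, (Rabs_right (/ _)) by (apply Rle_ge, Rlt_le, Rinv_0_lt_compat, INR_fact_lt_0).
  apply Rmult_le_compat_r. apply Rlt_le, Rinv_0_lt_compat, INR_fact_lt_0.
  unfold mm. eapply Rle_trans. apply fsum_abs. apply Rle_trans with (Mb nx A ^ q * Cb).
  unfold Cb. rewrite <- fsum_scal. apply fsum_le; intros. rewrite Rabs_mult. apply Rmult_le_compat_r. apply Rabs_pos.
  apply mpow_bound; auto.
  change (Mb nx A ^ S q) with (Mb nx A * Mb nx A ^ q). assert (0 < Mb nx A ^ q) by (apply pow_lt; lra). assert (0 <= Cb * Mb nx A ^ q * (Mb nx A - 1)) by (apply Rmult_le_pos; [apply Rmult_le_pos|]; lra). lra.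
Qed.

Lemma Bd_series nx nu A B delta Bd : is_Bdelta nx nu A B delta Bd -> forall i j, (i < nx)%nat -> (j < nu)%nat ->
  is_series (fun p => hc nx A B i j p * delta ^ p) (Bd i j).
Proof.
  intros [E [HE Hint]] i j Hi Hj. destruct (Hint i j Hi Hj) as [pr Hpr].
  assert (Hrad := hc_radius nx A B i j Hi).
  assert (Hf : forall s, mm nx (E s) B i j = PSeries (PS_derive (hc nx A B i j)) s).
  { intros s. rewrite <- (is_series_unique _ _ (pseries_is _ s (radius_derive_inf _ Hrad))).
    symmetry. apply is_series_unique.
    assert (H1 : is_series (fun p => fsum nx (fun l => B l j * (mpow nx A p i l / INR (fact p) * s ^ p))) (mm nx (E s) B i j)).
    { unfold mm. rewrite (fsum_ext nx _ (fun l => B l j * E s i l)) by (intros; ring).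
      apply is_series_fsum. intros l Hl. apply is_series_mul. apply expm_pseries; auto. }
    eapply is_series_ext; [|apply H1]. intros n. unfold PS_derive, hc. unfold mm at 1.
    unfold Rdiv. rewrite fsum_mulr. rewrite <- fsum_scal. rewrite fsum_mulr.
    apply fsum_ext; intros. rewrite fact_simpl, mult_INR. field. split. apply INR_fact_neq_0. apply not_0_INR; lia. }
  assert (HR1 : is_RInt (PSeries (PS_derive (hc nx A B i j))) 0 delta (RiemannInt pr)).
  { eapply is_RInt_ext; [|apply ex_RInt_Reals_aux_1]. intros; apply Hf. }
  assert (HR2 : is_RInt (PSeries (PS_derive (hc nx A B i j))) 0 delta (PSeries (hc nx A B i j) delta - PSeries (hc nx A B i j) 0)).
  { apply (is_RInt_derive (PSeries (hc nx A B i j))).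
    intros; apply is_derive_PSeries; auto.
    intros x _. apply continuity_pt_filterlim. apply PSeries_continuity. apply radius_derive_inf; auto. }
  pose proof (is_RInt_unique _ _ _ _ HR1) as E1. pose proof (is_RInt_unique _ _ _ _ HR2) as E2. rewrite E1 in E2.
  rewrite PSeries_0 in E2. cbv beta iota delta [hc] in E2. rewrite <- Hpr, E2, Rminus_0_r. apply pseries_is; auto.
Qed.

Lemma ynom_end nx nu A B K c a delta Ad Bd i : (i < nx)%nat ->
  is_expm nx A delta Ad -> is_Bdelta nx nu A B delta Bd ->
  ynom nx nu A B c (mv nx K c) a (a + delta) i = mv nx Ad c i + mv nu Bd (mv nx K c) i.
Proof.
  intros Hi HAd HBd. set (kc := mv nx K c).
  unfold ynom. replace (a + delta - a) with delta by ring.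
  rewrite <- (is_series_unique _ _ (pseries_is _ delta (cy_radius nx nu A B c kc i Hi))).
  apply is_series_unique.
  assert (H1 : is_series (fun p => fsum nx (fun j => c j * (mpow nx A p i j / INR (fact p) * delta ^ p))) (mv nx Ad c i)).
  { unfold mv. rewrite (fsum_ext nx _ (fun j => c j * Ad i j)) by (intros; ring).
    apply is_series_fsum. intros j Hj. apply is_series_mul. apply expm_pseries; auto. }
  assert (H2 : is_series (fun p => fsum nu (fun j => kc j * (hc nx A B i j p * delta ^ p))) (mv nu Bd kc i)).
  { unfold mv. rewrite (fsum_ext nu _ (fun j => kc j * Bd i j)) by (intros; ring).
    apply is_series_fsum. intros j Hj. apply is_series_mul. apply (Bd_series nx nu A B delta Bd HBd); auto. }
  eapply is_series_ext; [|apply (is_series_add _ _ _ _ H1 H2)]. intros p. unfold cy, pw.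
  destruct p as [|q].
  - cbv beta iota delta [hc]. rewrite Rplus_0_r.
    transitivity (fsum nx (fun j => c j * (mpow nx A 0 i j / INR (fact 0) * delta ^ 0)) + 0).
    f_equal. transitivity (fsum nu (fun _ : nat => 0)). apply fsum_ext; intros; ring. apply fsum_0.
    rewrite Rplus_0_r. unfold mv, Rdiv. rewrite !fsum_mulr. apply fsum_ext; intros; ring.
  - cbv beta iota delta [hc]. rewrite <- (mv_mm nu nx). unfold mv, Rdiv. rewrite Rmult_plus_distr_r, !fsum_mulr.
    f_equal; apply fsum_ext; intros; ring.
Qed.


Lemma exp_le x y : x <= y -> exp x <= exp y.
Proof. intros H. destruct (Req_dec x y). subst; lra. left; apply exp_increasing; lra. Qed.

Lemma fm_nonneg mu r : 0 <= mu -> 0 <= r -> 0 <= fm mu r.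
Proof. intros Hm Hr. unfold fm. destruct (Rle_dec mu 0). auto.
  apply Rmult_le_pos. pose proof (exp_le 0 (mu * r) ltac:(nra)). rewrite exp_0 in H. lra.
  apply Rlt_le, Rinv_0_lt_compat; lra. Qed.

Lemma fm_mono mu r1 r2 : 0 <= mu -> 0 <= r1 -> r1 <= r2 -> fm mu r1 <= fm mu r2.
Proof. intros Hm H1 H2. unfold fm. destruct (Rle_dec mu 0). auto.
  unfold Rdiv. apply Rmult_le_compat_r. apply Rlt_le, Rinv_0_lt_compat; lra.
  pose proof (exp_le (mu * r1) (mu * r2) ltac:(nra)). lra. Qed.

Lemma wnorm_d nx d nn s : vnorm nx (d s) <= wnorm nx d nn s.
Proof. unfold wnorm. rewrite <- (sqrt_pow2 (vnorm nx (d s))) at 1 by apply vnorm_nonneg.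
  apply sqrt_le_1_alt. pose proof (pow2_ge_0 (vnorm nx (nn s))). lra. Qed.
Lemma wnorm_n nx d nn s : vnorm nx (nn s) <= wnorm nx d nn s.
Proof. unfold wnorm. rewrite <- (sqrt_pow2 (vnorm nx (nn s))) at 1 by apply vnorm_nonneg.
  apply sqrt_le_1_alt. pose proof (pow2_ge_0 (vnorm nx (d s))). lra. Qed.

Lemma spec_norm_nonneg r c M nrm : is_spec_norm r c M nrm -> 0 <= nrm.
Proof. intros [Hub _]. apply Hub. exists (fun _ => 0). split. rewrite vnorm_zero_vec; lra.
  symmetry; apply vnorm_zero_all; intros; apply mv_zero; auto. Qed.

Lemma delta_cond mu del sig nphi : del > 0 -> sig > 0 -> 0 <= nphi ->
  (mu > 0 -> del <= / mu * ln ((sig / (1 + sig)) * mu / Rmax nphi 1 + 1)) ->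
  (mu <= 0 -> del <= (sig / (1 + sig)) * / Rmax nphi 1) ->
  fm (Rmax mu 0) del * nphi <= sig / (1 + sig).
Proof.
  intros Hd Hs Hn H1 H2. set (Mx := Rmax nphi 1). assert (HMx : 1 <= Mx) by apply Rmax_r.
  assert (HnM : nphi <= Mx) by apply Rmax_l.
  assert (Hk : 0 < sig / (1 + sig)) by (apply Rdiv_lt_0_compat; lra).
  assert (fm (Rmax mu 0) del * Mx <= sig / (1 + sig)).
  { unfold fm. destruct (Rle_dec (Rmax mu 0) 0) as [Hle|Hlt].
    - assert (mu <= 0). { pose proof (Rmax_l mu 0). lra. }
      specialize (H2 H). apply Rmult_le_compat_r with (r := Mx) in H2; [|lra].
      fold Mx in H2. replace (sig / (1 + sig) * / Mx * Mx) with (sig / (1 + sig)) in H2 by (field; lra). auto.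
    - assert (Hmu : mu > 0). { destruct (Rle_dec mu 0) as [Hm|Hm]; [|lra]. exfalso. rewrite (Rmax_right mu 0) in * by lra. lra. }
      rewrite Rmax_left by lra. specialize (H1 Hmu).
      set (X := sig / (1 + sig) * mu / Mx). assert (HX : 0 < X) by (unfold X; apply Rdiv_lt_0_compat; nra).
      assert (mu * del <= ln (X + 1)).
      { apply Rmult_le_compat_l with (r := mu) in H1; [|lra]. rewrite <- Rmult_assoc, Rinv_r, Rmult_1_l in H1 by lra. auto. }
      apply exp_le in H. rewrite exp_ln in H by lra.
      apply Rle_trans with (X / mu * Mx). apply Rmult_le_compat_r. lra.
      unfold Rdiv. apply Rmult_le_compat_r. apply Rlt_le, Rinv_0_lt_compat; lra. lra.
      unfold X. right. field. lra. }
  pose proof (fm_nonneg (Rmax mu 0) del (Rmax_r mu 0) ltac:(lra)).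
  assert (fm (Rmax mu 0) del * nphi <= fm (Rmax mu 0) del * Mx) by (apply Rmult_le_compat_l; auto). lra.
Qed.

Theorem lemma2 (nx nu : nat) (A B K : mat) (Delta : R) (b h : nat)
  (M P : mat) (gamma1 gamma2 muA normPhi sigma : R) (Ad Bd : mat) :
  stabilizable nx nu A B ->
  hurwitz nx (madd A (mm nu B K)) ->
  Delta > 0 -> (1 <= b)%nat -> (1 <= h)%nat ->
  is_expm nx A (Delta / INR b) Ad ->
  is_Bdelta nx nu A B (Delta / INR b) Bd ->
  pos_def nx M ->
  (forall i j, (i < nx)%nat -> (j < nx)%nat ->
     madd (madd (mm nx (mtr (madd A (mm nu B K))) P)
                (mm nx P (madd A (mm nu B K)))) M i j = 0) ->
  is_min_eig nx M gamma1 ->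
  is_spec_norm nx nx (mscal 2 (mm nu (mm nx P B) K)) gamma2 ->
  is_log_norm nx A muA ->
  is_spec_norm nx nx (madd A (mm nu B K)) normPhi ->
  sigma > 0 -> gamma1 - sigma * gamma2 > 0 ->
  (muA > 0 -> Delta / INR b <=
     / muA * ln ((sigma / (1 + sigma)) * muA / Rmax normPhi 1 + 1)) ->
  (muA <= 0 -> Delta / INR b <= (sigma / (1 + sigma)) * / Rmax normPhi 1) ->
  exists rho, rho > 0 /\
  forall (hs tau z : nat -> R) (x0 : vec) (d nn u x : R -> vec),
    (forall j, hs j < hs (S j)) -> (forall j, tau j >= 0) ->
    success_seq Delta hs tau z ->
    measurable_vfun nx d -> measurable_vfun nx nn ->
    bounded_vfun nx d -> bounded_vfun nx nn ->
    (forall t, 0 <= t < z O -> forall i, (i < nu)%nat -> u t i = 0) ->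
    (forall m p t, (p < h)%nat ->
       z m + INR p * (Delta / INR b) <= t -> t < z (S m) ->
       (p = (h - 1)%nat \/ t < z m + INR (S p) * (Delta / INR b)) ->
       forall i, (i < nu)%nat ->
         u t i = mv nx K (alpha nx nu Ad Bd K (vadd (x (z m)) (nn (z m))) p) i) ->
    is_solution nx nu A B u d x0 x ->
    forall m p t W, (p < h)%nat ->
      z m + INR p * (Delta / INR b) <= t ->
      t < z m + INR (S p) * (Delta / INR b) -> t < z (S m) ->
      is_wsup nx d nn t W ->
      vnorm nx (vsub (alpha nx nu Ad Bd K (vadd (x (z m)) (nn (z m))) p) (x t))
        <= sigma * vnorm nx (x t) + rho * W.
Proof.
  intros Hstab Hhur HDelta Hb Hh HAd HBd HM HLyap Hg1 Hg2 HmuA HnPhi Hsig Hgs Hc1 Hc2.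
  set (del := Delta / INR b) in *.
  assert (Hdel : del > 0) by (unfold del; apply Rdiv_lt_0_compat; [lra| apply lt_0_INR; lia]).
  set (mu := Rmax muA 0). assert (Hmu : 0 <= mu) by apply Rmax_r.
  assert (HA : forall v, dot nx v (mv nx A v) <= mu * dot nx v v).
  { intros v. pose proof (log_norm_quad nx A muA HmuA v). pose proof (dot_self_nonneg nx v). pose proof (Rmax_l muA 0).
    unfold mu. nra. }
  assert (HnP : 0 <= normPhi) by (eapply spec_norm_nonneg; eauto).
  assert (Hkap : fm mu del * normPhi <= sigma / (1 + sigma)) by (apply delta_cond; auto).
  set (L := exp (mu * del)). set (f := fm mu del).
  assert (HL : 1 <= L) by (unfold L; rewrite <- exp_0; apply exp_le; nra).
  assert (Hf : 0 <= f) by (apply fm_nonneg; lra).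
  set (Lam := L + f + 1). assert (HLam : 1 <= Lam) by (unfold Lam; lra).
  assert (HLamh : 1 <= Lam ^ h) by (apply pow_R1_Rle; auto).
  set (rho := (1 + sigma) * (L * Lam ^ h + f) + 1).
  exists rho. split. { unfold rho. assert (0 <= L * Lam ^ h + f) by nra. nra. }
  intros hs tau z x0 d nn u x Hhs Htau Hz Hmd Hmn Hbd Hbn Hu0 Hu Hsol m p t W Hp Ht1 Ht2 Ht3 HW.
  destruct Hsol as [Hx0 [Hxac HN]].
  match type of HN with null_set ?N => set (N0 := N) in HN end.
  assert (Hzm : 0 <= z m).
  { destruct Hz as [Hsucc _]. destruct (Hsucc m) as [k [Ek _]]. rewrite Ek. apply Rmult_le_pos; [apply pos_INR|lra]. }
  assert (Ht0 : 0 <= INR p * del) by (apply Rmult_le_pos; [apply pos_INR|lra]).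
  assert (HWb : forall s, 0 <= s <= t -> wnorm nx d nn s <= W).
  { intros s Hs. destruct HW as [Hub _]. apply Hub. exists s; split; auto. }
  assert (HW0 : 0 <= W).
  { eapply Rle_trans; [|apply (HWb 0)]. unfold wnorm. apply sqrt_pos. lra. }
  set (al := fun q => alpha nx nu Ad Bd K (vadd (x (z m)) (nn (z m))) q).
  fold (al p).
  assert (Hctrl : forall q r, (q <= p)%nat -> z m + INR q * del <= r -> r < z m + INR (S q) * del -> r <= t ->
     forall i, (i < nu)%nat -> u r i = mv nx K (al q) i).
  { intros q r Hq H1 H2 H3 i Hi. apply Hu; auto. lia. lra. }
  assert (Hxd : forall r, 0 <= r -> ~ (0 <= r /\ ~ (forall i, (i < nx)%nat ->
     derivable_pt_lim (fun s => x s i) r (mv nx A (x r) i + mv nu B (u r) i + d r i))) ->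
     forall i, (i < nx)%nat -> derivable_pt_lim (fun s => x s i) r (mv nx A (x r) i + mv nu B (u r) i + d r i)).
  { intros r Hr Hn. apply NNPP. intros Hn2. apply Hn. split; auto. }
  assert (Hrec : forall q, (q <= p)%nat -> vnorm nx (vsub (al q) (x (z m + INR q * del))) <= Lam ^ q * W).
  { induction q; intros Hq.
    - simpl. replace (z m + 0 * del) with (z m) by ring. rewrite Rmult_1_l.
      rewrite (vnorm_ext nx _ (nn (z m))). eapply Rle_trans. apply wnorm_n. apply HWb. lra.
      intros i Hi. unfold al, vsub, vadd; simpl. ring.
    - specialize (IHq ltac:(lia)). set (a := z m + INR q * del).
      assert (Ha0 : 0 <= a) by (unfold a; pose proof (pos_INR q); nra).
      assert (Hqp : INR (S q) <= INR p) by (apply le_INR; lia).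
      assert (Hend : a + del <= t). { unfold a. rewrite S_INR in Hqp. nra. }
      assert (Eend : z m + INR (S q) * del = a + del) by (unfold a; rewrite S_INR; ring).
      pose proof (comparison nx A mu (mv nu B (mv nx K (al q))) x (ynom nx nu A B (al q) (mv nx K (al q)) a) d
                   (fun _ _ => 0) a (a + del) N0 0 W Hmu ltac:(lra) ltac:(lra) HW0 HA) as Hcmp.
      specialize (Hcmp ltac:(intros i Hi; apply (ac_restrict _ 0 (a + del)); try lra; apply Hxac; auto; lra)).
      specialize (Hcmp ltac:(intros i Hi; apply ynom_ac; auto; lra)).
      specialize (Hcmp HN).
      specialize (Hcmp ltac:(intros r Hr Hnr i Hi;
        rewrite <- (mv_ext nu B (u r) (mv nx K (al q)) i); [apply Hxd; auto; lra|];
        intros j Hj; apply Hctrl; [lia | unfold a in Hr; lra | rewrite S_INR; unfold a in Hr; lra | lra | auto])).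
      specialize (Hcmp ltac:(intros r Hr i Hi; apply ynom_deriv; auto)).
      specialize (Hcmp ltac:(intros r Hr; eapply Rle_trans; [apply wnorm_d|]; apply HWb; lra)).
      specialize (Hcmp ltac:(intros r Hr; rewrite vnorm_zero_vec; lra)).
      replace (a + del - a) with del in Hcmp by ring. fold L f in Hcmp.
      rewrite (vnorm_ext nx (vsub (ynom nx nu A B (al q) (mv nx K (al q)) a a) (x a)) (vsub (al q) (x a))) in Hcmp
        by (intros i Hi; unfold vsub; rewrite ynom_at_a; auto).
      rewrite (vnorm_ext nx (vsub (ynom nx nu A B (al q) (mv nx K (al q)) a (a + del)) (x (a + del))) (vsub (al (S q)) (x (a + del)))) in Hcmp.
      2: { intros i Hi. unfold vsub. rewrite (ynom_end nx nu A B K (al q) a del Ad Bd i Hi HAd HBd). unfold al. simpl. unfold vadd. auto. }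
      rewrite Eend. fold a in IHq.
      assert (L * vnorm nx (vsub (al q) (x a)) <= L * (Lam ^ q * W)) by (apply Rmult_le_compat_l; lra).
      assert (1 <= Lam ^ q) by (apply pow_R1_Rle; auto).
      change (Lam ^ S q) with (Lam * Lam ^ q). unfold Lam in *.
      assert (0 <= (f + 1) * (L + f + 1) ^ q * W - W * f).
      { assert (W * f <= W * f * (L + f + 1) ^ q) by (assert (0 <= W * f) by nra; nra). nra. }
      nra. }
  set (t0 := z m + INR p * del).
  assert (Hs0 : 0 <= t - t0) by (unfold t0; lra).
  assert (Hs1 : t - t0 <= del) by (unfold t0; rewrite S_INR in Ht2; lra).
  set (bk := mv nu B (mv nx K (al p))).
  pose proof (comparison nx A mu bk x (fun _ => al p) d (fun _ i => - (mv nx A (al p) i + bk i)) t0 t N0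
               (normPhi * vnorm nx (al p)) W Hmu ltac:(lra) ltac:(pose proof (vnorm_nonneg nx (al p)); nra) HW0 HA) as Hcmp.
  specialize (Hcmp ltac:(intros i Hi; apply (ac_restrict _ 0 t); [unfold t0; lra | lra | apply Hxac; auto; lra])).
  specialize (Hcmp ltac:(intros i Hi; change (abs_cont_on (fun _ => al p i) t0 t); apply ac_const)).
  specialize (Hcmp HN).
  specialize (Hcmp ltac:(intros r Hr Hnr i Hi;
        unfold bk; rewrite <- (mv_ext nu B (u r) (mv nx K (al p)) i); [apply Hxd; auto; unfold t0 in Hr; lra|];
        intros j Hj; apply Hctrl; [lia | unfold t0 in Hr; lra | lra | lra | auto])).
  specialize (Hcmp ltac:(intros r Hr i Hi; cbv beta; replace (mv nx A (al p) i + bk i + - (mv nx A (al p) i + bk i)) with 0 by ring;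
       change (derivable_pt_lim (fun _ => al p i) r 0); apply dpl_const)).
  specialize (Hcmp ltac:(intros r Hr; eapply Rle_trans; [apply wnorm_d|]; apply HWb; unfold t0 in Hr; lra)).
  specialize (Hcmp ltac:(intros r Hr; cbv beta; rewrite (vnorm_opp nx (fun i => mv nx A (al p) i + bk i));
      rewrite (vnorm_ext nx (fun i => mv nx A (al p) i + bk i) (mv nx (madd A (mm nu B K)) (al p)));
      [apply spec_norm_bound; auto|]; intros i Hi; rewrite mv_madd, mv_mm; auto)).
  fold t0 in Hcmp. simpl in Hcmp.
  assert (HE0 := Hrec p (le_n _)). fold t0 in HE0.
  set (E := vnorm nx (vsub (al p) (x t))) in *.
  set (X := vnorm nx (x t)).
  set (E0 := vnorm nx (vsub (al p) (x t0))) in *.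
  set (s := t - t0) in *.
  assert (Hexp : exp (mu * s) <= L) by (unfold L; apply exp_le; nra).
  assert (Hfm : fm mu s <= f) by (apply fm_mono; auto).
  assert (Hfm0 : 0 <= fm mu s) by (apply fm_nonneg; auto).
  assert (Hal : vnorm nx (al p) <= E + X).
  { rewrite (vnorm_ext nx (al p) (vadd (vsub (al p) (x t)) (x t))). apply vnorm_triang.
    intros i Hi; unfold vadd, vsub; ring. }
  assert (HE0b : E0 <= Lam ^ h * W).
  { eapply Rle_trans; [apply HE0|]. apply Rmult_le_compat_r; auto. apply Rle_pow; auto. lia. }
  set (kap := fm mu s * normPhi).
  assert (Hk0 : 0 <= kap) by (unfold kap; nra).
  assert (Hk1 : kap * (1 + sigma) <= sigma).
  { assert (kap <= sigma / (1 + sigma)). { unfold kap. apply Rle_trans with (f * normPhi). apply Rmult_le_compat_r; auto. auto. }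
    apply Rmult_le_compat_r with (r := 1 + sigma) in H; [|lra]. replace (sigma / (1 + sigma) * (1 + sigma)) with sigma in H by (field; lra). lra. }
  assert (HEn : 0 <= E) by apply vnorm_nonneg. assert (HXn : 0 <= X) by apply vnorm_nonneg.
  assert (HE0n : 0 <= E0) by apply vnorm_nonneg.
  set (Q := L * Lam ^ h + f).
  assert (Hmain : E * (1 - kap) <= kap * X + Q * W).
  { assert (exp (mu * s) * E0 <= L * (Lam ^ h * W)).
    { apply Rmult_le_compat; auto. apply Rlt_le, exp_pos. }
    assert ((normPhi * vnorm nx (al p) + W) * fm mu s <= kap * (E + X) + f * W).
    { unfold kap. assert (normPhi * vnorm nx (al p) <= normPhi * (E + X)) by (apply Rmult_le_compat_l; auto).
      assert (W * fm mu s <= W * f) by (apply Rmult_le_compat_l; auto). nra. }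
    unfold Q. nra. }
  assert (H1s : 1 <= (1 + sigma) * (1 - kap)) by nra.
  assert (E <= (1 + sigma) * (1 - kap) * E) by nra.
  assert ((1 + sigma) * (1 - kap) * E <= (1 + sigma) * (kap * X + Q * W)).
  { rewrite Rmult_assoc. apply Rmult_le_compat_l. lra. rewrite Rmult_comm. auto. }
  assert ((1 + sigma) * kap * X <= sigma * X) by (apply Rmult_le_compat_r; auto; lra).
  unfold rho. fold Q. nra.
Qed.
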